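(* Assume $\gamma$ is radial and satisfies, near $r=\sqrt{x^2+y^2}=0$, $\gamma(r)=h+\frac{r^2}{2R_1}+\frac{r^4}{8R_3^3}+O(r^6)$. Let $f_0\in\mathbb R$ and let $\varpi_0$ be the unique solution of $-\frac1{12}\mathrm{div}(\gamma^3\nabla\varpi_0)=f_0$ in $B(\mathbf 0,L)$, $\varpi_0=0$ on $\partial B(\mathbf 0,L)$. Then $$\int_{B(\mathbf 0,L)}\gamma^3|\nabla\varpi_0|^2=72\pi|f_0|^2\Big[\frac{R_1^2}{h}-\frac{3R_1^4}{R_3^3}|\ln h|\Big]+O(1),$$ where $O(1)$ denotes a quantity bounded, for all $h\in(0,1]$, by a constant independent of $h$.
   Context: $R,S>0$ are the radii of two spheres, $0<L<\min(R,S)$, and $R_1,R_3>0$ are defined by $\frac1{R_1}=\frac1S+\frac1R$, $\frac1{R_3^3}=\frac1{S^3}+\frac1{R^3}$. On $B(\mathbf 0,L)\subset\mathbb R^2$, $\gamma_t(x,y)=S-\sqrt{S^2-x^2-y^2}$, $\gamma_b(x,y)=-R+\sqrt{R^2-x^2-y^2}$ and, for $h>0$, $\gamma=h+\gamma_t-\gamma_b$. *)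

(* Defs.v *)
From Stdlib Require Import Reals Lra.
From Coquelicot Require Import Coquelicot.
Open Scope R_scope.

(* Radii: Rad = R (bottom sphere), Srad = S (top sphere). *)
Definition radR1 (Rad Srad : R) : R := / (/ Srad + / Rad).
Definition radR3 (Rad Srad : R) : R := Rpower (/ (/ Srad ^ 3 + / Rad ^ 3)) (1 / 3).

Definition gamma_t (Srad x y : R) : R := Srad - sqrt (Srad ^ 2 - x ^ 2 - y ^ 2).
Definition gamma_b (Rad x y : R) : R := - Rad + sqrt (Rad ^ 2 - x ^ 2 - y ^ 2).
Definition gamma (Rad Srad h x y : R) : R := h + gamma_t Srad x y - gamma_b Rad x y.

Definition in_cdisk (L : R) (p : R * R) : Prop := fst p ^ 2 + snd p ^ 2 <= L ^ 2.

Definition dx (w : R -> R -> R) (x y : R) : R := Derive (fun t => w t y) x.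
Definition dy (w : R -> R -> R) (x y : R) : R := Derive (fun t => w x t) y.

Definition is_solution (g : R -> R -> R) (L f0 : R) (w : R -> R -> R) : Prop :=
  (forall x y, x ^ 2 + y ^ 2 <= L ^ 2 ->
     filterlim (fun p : R * R => w (fst p) (snd p))
       (within (in_cdisk L) (locally (x, y))) (locally (w x y))) /\
  (forall x y, x ^ 2 + y ^ 2 = L ^ 2 -> w x y = 0) /\
  (forall x y, x ^ 2 + y ^ 2 < L ^ 2 ->
     ex_derive (fun t => w t y) x /\
     ex_derive (fun t => w x t) y /\
     ex_derive (fun t => g t y ^ 3 * dx w t y) x /\
     ex_derive (fun t => g x t ^ 3 * dy w x t) y /\
     - (1 / 12) * (Derive (fun t => g t y ^ 3 * dx w t y) x
                   + Derive (fun t => g x t ^ 3 * dy w x t) y) = f0).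

Definition energy (g : R -> R -> R) (L : R) (w : R -> R -> R) : R :=
  RInt (fun x =>
    RInt (fun y => g x y ^ 3 * (dx w x y ^ 2 + dy w x y ^ 2))
         (- sqrt (L ^ 2 - x ^ 2)) (sqrt (L ^ 2 - x ^ 2)))
    (- L) L.

(* Main.v *)
Require Import Defs.
From Stdlib Require Import Reals Lra Psatz ClassicalEpsilon.
From Coquelicot Require Import Coquelicot.
Open Scope R_scope.

Lemma small_eq0 (x : R) : (forall eps, 0 < eps -> Rabs x < eps) -> x = 0.
Proof.
  intros H. destruct (Req_dec x 0) as [|Hn]; auto.
  specialize (H (Rabs x) (Rabs_pos_lt _ Hn)). lra.
Qed.

Lemma Rabs_le_inv' (x y : R) : Rabs x <= y -> - y <= x <= y.
Proof. unfold Rabs; destruct (Rcase_abs x); lra. Qed.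

Lemma cont_ex_RInt (f : R -> R) (u v : R) :
  (forall z, Rmin u v <= z <= Rmax u v -> continuity_pt f z) -> ex_RInt f u v.
Proof.
  intros H. apply (@ex_RInt_continuous R_CompleteNormedModule). intros z Hz.
  apply continuity_pt_filterlim. auto.
Qed.

Lemma FTC_open (F f : R -> R) (a b : R) :
  a < b ->
  (forall eps, 0 < eps -> exists d, 0 < d /\ forall y, a <= y <= b -> Rabs (y - a) < d -> Rabs (F y - F a) < eps) ->
  (forall eps, 0 < eps -> exists d, 0 < d /\ forall y, a <= y <= b -> Rabs (y - b) < d -> Rabs (F y - F b) < eps) ->
  (forall x, a < x < b -> is_derive F x (f x)) ->
  (forall x, a <= x <= b -> continuity_pt f x) ->
  RInt f a b = F b - F a.
Proof.
  intros Hab Ha Hb Hd Hc.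
  destruct (bounded_continuity f a b) as [M HM].
  { intros x Hx. apply continuity_pt_filterlim. auto. }
  assert (HM' : forall x, a <= x <= b -> Rabs (f x) <= M).
  { intros x Hx. specialize (HM x Hx). apply Rlt_le. exact HM. }
  assert (HM0 : 0 <= M).
  { specialize (HM' a ltac:(lra)). pose proof (Rabs_pos (f a)). lra. }
  assert (Hex : forall u v, a <= u -> u <= v -> v <= b -> ex_RInt f u v).
  { intros u v H1 H2 H3. apply cont_ex_RInt. intros z Hz.
    rewrite Rmin_left in Hz by lra. rewrite Rmax_right in Hz by lra. apply Hc; lra. }
  assert (Hkey : forall eta, 0 < eta < (b - a) / 2 ->
             RInt f (a + eta) (b - eta) = F (b - eta) - F (a + eta)).
  { intros eta He. apply is_RInt_unique.
    apply (is_RInt_derive F f).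
    - intros x Hx. rewrite Rmin_left in Hx by lra. rewrite Rmax_right in Hx by lra.
      apply Hd; lra.
    - intros x Hx. rewrite Rmin_left in Hx by lra. rewrite Rmax_right in Hx by lra.
      apply continuity_pt_filterlim. apply Hc; lra. }
  apply Rminus_diag_uniq. apply small_eq0. intros eps Heps.
  destruct (Ha (eps/3) ltac:(lra)) as [d1 [Hd1 H1]].
  destruct (Hb (eps/3) ltac:(lra)) as [d2 [Hd2 H2]].
  set (eta := Rmin (Rmin (d1/2) (d2/2)) (Rmin ((b-a)/4) (eps / (6 * (M + 1))))).
  assert (Heta0 : 0 < eta).
  { unfold eta. repeat apply Rmin_glb_lt; try lra. apply Rdiv_lt_0_compat; lra. }
  assert (Heta1 : eta <= d1/2) by (unfold eta; eapply Rle_trans; [apply Rmin_l|apply Rmin_l]).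
  assert (Heta2 : eta <= d2/2) by (unfold eta; eapply Rle_trans; [apply Rmin_l|apply Rmin_r]).
  assert (Heta3 : eta <= (b-a)/4) by (unfold eta; eapply Rle_trans; [apply Rmin_r|apply Rmin_l]).
  assert (Heta4 : eta <= eps / (6 * (M+1))) by (unfold eta; eapply Rle_trans; [apply Rmin_r|apply Rmin_r]).
  assert (Hk := Hkey eta ltac:(lra)).
  assert (Hch : RInt f a b = RInt f a (a + eta) + RInt f (a+eta) (b - eta) + RInt f (b - eta) b).
  { rewrite <- (RInt_Chasles f a (a+eta) b); [|apply Hex; lra|apply Hex; lra].
    rewrite <- (RInt_Chasles f (a+eta) (b-eta) b); [|apply Hex; lra|apply Hex; lra].
    unfold plus; simpl. ring. }
  assert (E1 : Rabs (RInt f a (a + eta)) <= eta * M).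
  { replace (eta * M) with ((a + eta - a) * M) by ring.
    apply abs_RInt_le_const; [lra|apply Hex; lra|]. intros t Ht. apply HM'; lra. }
  assert (E2 : Rabs (RInt f (b - eta) b) <= eta * M).
  { replace (eta * M) with ((b - (b - eta)) * M) by ring.
    apply abs_RInt_le_const; [lra|apply Hex; lra|]. intros t Ht. apply HM'; lra. }
  assert (E3 : Rabs (F (a + eta) - F a) < eps / 3).
  { apply H1; [lra|]. rewrite Rabs_pos_eq; lra. }
  assert (E4 : Rabs (F (b - eta) - F b) < eps / 3).
  { apply H2; [lra|]. rewrite Rabs_left; lra. }
  assert (E5 : eta * M <= eps / 6).
  { assert (eta * (M + 1) <= eps / 6).
    { apply Rle_trans with (eps / (6 * (M+1)) * (M+1)).
      apply Rmult_le_compat_r; lra. right. field. lra. }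
    nra. }
  rewrite Hch, Hk.
  revert E1 E2 E3 E4 E5. 
  generalize (RInt f a (a + eta)) (RInt f (b - eta) b) (F (a+eta)) (F a) (F (b - eta)) (F b).
  intros r1 r2 r3 r4 r5 r6 E1 E2 E3 E4 E5.
  apply Rabs_def2 in E3. apply Rabs_def2 in E4.
  apply Rabs_le_inv' in E1. apply Rabs_le_inv' in E2.
  apply Rabs_def1; lra.
Qed.

Lemma param_cont (K : R -> R -> R) (x0 a b : R) : a <= b ->
  (forall t, a <= t <= b -> continuity_2d_pt K x0 t) ->
  (exists d, 0 < d /\ forall v, Rabs (v - x0) < d -> ex_RInt (K v) a b) ->
  continuity_pt (fun v => RInt (K v) a b) x0.
Proof.
  intros Hab HK [d0 [Hd0 Hex]].
  unfold continuity_pt, continue_in, limit1_in, limit_in. simpl. unfold R_dist.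
  intros eps Heps.
  assert (Hp : 0 < eps / (b - a + 1)) by (apply Rdiv_lt_0_compat; lra).
  destruct (uniform_continuity_2d_1d' K a b x0 HK (mkposreal _ Hp)) as [del Hdel].
  exists (Rmin d0 del). split. { apply Rmin_glb_lt; [lra|apply cond_pos]. }
  intros v [_ Hv].
  assert (Hv0 : Rabs (v - x0) < d0) by (eapply Rlt_le_trans; [exact Hv|apply Rmin_l]).
  assert (Hv1 : Rabs (v - x0) < del) by (eapply Rlt_le_trans; [exact Hv|apply Rmin_r]).
  assert (E : RInt (K v) a b - RInt (K x0) a b = RInt (fun t => K v t - K x0 t) a b).
  { symmetry. apply (RInt_minus (V:=R_CompleteNormedModule)); apply Hex; try assumption.
    rewrite Rminus_diag, Rabs_R0; lra. }
  rewrite E.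
  apply Rle_lt_trans with ((b - a) * (eps / (b - a + 1))).
  - apply abs_RInt_le_const; [lra| |].
    + apply (ex_RInt_minus (V:=R_CompleteNormedModule)); apply Hex; try assumption.
      rewrite Rminus_diag, Rabs_R0; lra.
    + intros t Ht. left. apply (Hdel t x0 t v Ht); try assumption.
      * pose proof (cond_pos del); lra.
      * apply Rlt_le in Hv1. apply Rabs_le_inv' in Hv1. lra.
      * rewrite Rminus_diag, Rabs_R0. apply cond_pos.
  - apply Rlt_le_trans with ((b - a + 1) * (eps / (b - a + 1))).
    + apply Rmult_lt_compat_r; lra.
    + right. field. lra.
Qed.

Lemma RIplus (f g : R -> R) a b : ex_RInt f a b -> ex_RInt g a b ->
  RInt (fun x => f x + g x) a b = RInt f a b + RInt g a b.
Proof. intros. apply (RInt_plus (V:=R_CompleteNormedModule) f g); auto. Qed.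
Lemma RIminus (f g : R -> R) a b : ex_RInt f a b -> ex_RInt g a b ->
  RInt (fun x => f x - g x) a b = RInt f a b - RInt g a b.
Proof. intros. apply (RInt_minus (V:=R_CompleteNormedModule) f g); auto. Qed.
Lemma RIscal (f : R -> R) c a b : ex_RInt f a b ->
  RInt (fun x => c * f x) a b = c * RInt f a b.
Proof. intros. apply (RInt_scal (V:=R_CompleteNormedModule) f a b c); auto. Qed.
Lemma RIconst c a b : RInt (fun _ => c) a b = (b - a) * c.
Proof. apply (RInt_const (V:=R_CompleteNormedModule)). Qed.
Lemma RIchasles (f : R -> R) a b c : ex_RInt f a b -> ex_RInt f b c ->
  RInt f a b + RInt f b c = RInt f a c.
Proof. intros. apply (RInt_Chasles (V:=R_CompleteNormedModule) f); auto. Qed.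
Lemma RIswap (f : R -> R) a b : ex_RInt f a b -> - RInt f a b = RInt f b a.
Proof. intros. apply (opp_RInt_swap (V:=R_CompleteNormedModule) f); auto. Qed.
Lemma cont_all_ex_RInt (f : R -> R) a b : (forall z, continuity_pt f z) -> ex_RInt f a b.
Proof. intros H. apply cont_ex_RInt. intros; apply H. Qed.

Lemma exRI_scal (f : R -> R) c a b : ex_RInt f a b -> ex_RInt (fun x => c * f x) a b.
Proof. intros. apply (ex_RInt_scal (V:=R_NormedModule) f a b c); auto. Qed.
Lemma exRI_plus (f g : R -> R) a b : ex_RInt f a b -> ex_RInt g a b -> ex_RInt (fun x => f x + g x) a b.
Proof. intros. apply (ex_RInt_plus (V:=R_NormedModule) f g); auto. Qed.
Lemma exRI_minus (f g : R -> R) a b : ex_RInt f a b -> ex_RInt g a b -> ex_RInt (fun x => f x - g x) a b.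
Proof. intros. apply (ex_RInt_minus (V:=R_NormedModule) f g); auto. Qed.

Lemma RIext (f g : R -> R) a b : (forall x, Rmin a b < x < Rmax a b -> f x = g x) -> RInt f a b = RInt g a b.
Proof. intros H. apply (RInt_ext (V:=R_CompleteNormedModule)). exact H. Qed.

Lemma within_eps (L : R) (f : R -> R -> R) (x y : R) :
  filterlim (fun p : R * R => f (fst p) (snd p))
       (within (in_cdisk L) (locally (x, y))) (locally (f x y)) ->
  forall eps, 0 < eps -> exists d, 0 < d /\ forall u v, u ^ 2 + v ^ 2 <= L ^ 2 ->
     Rabs (u - x) < d -> Rabs (v - y) < d -> Rabs (f u v - f x y) < eps.
Proof.
  intros H eps Heps.
  assert (Hb : locally (f x y) (fun z => Rabs (z - f x y) < eps)).
  { exists (mkposreal _ Heps). intros z Hz. exact Hz. }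
  specialize (H _ Hb). destruct H as [d Hd].
  exists d. split; [apply cond_pos|]. intros u v Huv Hu Hv.
  apply (Hd (u, v)); [split; assumption| exact Huv].
Qed.

Lemma c2d_y (g : R -> R -> R) x y : continuity_2d_pt g x y -> continuity_pt (g x) y.
Proof.
  intros H. unfold continuity_pt, continue_in, limit1_in, limit_in. simpl. unfold R_dist.
  intros eps Heps. destruct (H (mkposreal _ Heps)) as [d Hd].
  exists d. split; [apply cond_pos|]. intros v [_ Hv]. apply Hd; [|exact Hv].
  rewrite Rminus_diag, Rabs_R0. apply cond_pos.
Qed.

Lemma evt_rect (g : R -> R -> R) (A : R) : 0 <= A ->
  (forall x y, continuity_2d_pt g x y) ->
  exists x y, -A <= x <= A /\ -A <= y <= A /\
    forall u v, -A <= u <= A -> -A <= v <= A -> g u v <= g x y.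
Proof.
  intros HA Hg.
  assert (Hy : forall x, { y | -A <= y <= A /\ forall v, -A <= v <= A -> g x v <= g x y }).
  { intros x. apply constructive_indefinite_description.
    destruct (continuity_ab_maj (g x) (-A) A ltac:(lra)) as [ym [H1 H2]].
    { intros c _. apply c2d_y. apply Hg. }
    exists ym. split; assumption. }
  set (ym := fun x => proj1_sig (Hy x)).
  assert (Hym : forall x, -A <= ym x <= A /\ forall v, -A <= v <= A -> g x v <= g x (ym x)).
  { intros x. unfold ym. destruct (Hy x) as [y Hy']. exact Hy'. }
  set (m := fun x => g x (ym x)).
  assert (Hm : forall x0, continuity_pt m x0).
  { intros x0. unfold continuity_pt, continue_in, limit1_in, limit_in. simpl. unfold R_dist.
    intros eps Heps.
    destruct (uniform_continuity_2d g (x0 - 1) (x0 + 1) (-A) A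
       (fun x y _ _ => Hg x y) (mkposreal _ Heps)) as [d Hd].
    exists (Rmin d 1). split. { apply Rmin_glb_lt; [apply cond_pos|lra]. }
    intros x [_ Hx].
    assert (Hx1 : Rabs (x - x0) < d) by (eapply Rlt_le_trans; [exact Hx|apply Rmin_l]).
    assert (Hx2 : Rabs (x - x0) < 1) by (eapply Rlt_le_trans; [exact Hx|apply Rmin_r]).
    apply Rlt_le in Hx2. apply Rabs_le_inv' in Hx2 || idtac.
    destruct (Hym x) as [Hb1 Hm1]. destruct (Hym x0) as [Hb0 Hm0].
    assert (Hx3 : x0 - 1 <= x <= x0 + 1).
    { unfold Rabs in Hx2; destruct (Rcase_abs (x - x0)); lra. }
    assert (E1 : Rabs (g x (ym x0) - g x0 (ym x0)) < eps).
    { apply (Hd x0 (ym x0) x (ym x0)); try lra.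
      rewrite Rminus_diag, Rabs_R0; apply cond_pos. }
    assert (E2 : Rabs (g x0 (ym x) - g x (ym x)) < eps).
    { apply (Hd x (ym x) x0 (ym x)); try lra.
      rewrite Rabs_minus_sym; exact Hx1.
      rewrite Rminus_diag, Rabs_R0; apply cond_pos. }
    specialize (Hm1 (ym x0) ltac:(lra)). specialize (Hm0 (ym x) ltac:(lra)).
    unfold m. unfold Rabs in *. repeat destruct Rcase_abs; lra. }
  destruct (continuity_ab_maj m (-A) A ltac:(lra) (fun c _ => Hm c)) as [xM [HxM1 HxM2]].
  exists xM, (ym xM). destruct (Hym xM) as [Hb _]. split; [exact HxM2|]. split; [exact Hb|].
  intros u v Hu Hv. destruct (Hym u) as [_ Hu'].
  eapply Rle_trans; [apply Hu'; exact Hv|]. apply HxM1. exact Hu.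
Qed.

Definition clampR (A v : R) := Rmax (-A) (Rmin A v).

Lemma clamp_lip A A' v v' : 0 <= A -> 0 <= A' ->
  Rabs (clampR A v - clampR A' v') <= Rabs (A - A') + Rabs (v - v').
Proof.
  intros HA HA'. unfold clampR, Rmax, Rmin.
  repeat destruct Rle_dec; unfold Rabs; repeat destruct Rcase_abs; lra.
Qed.

Lemma clamp_in A v : 0 <= A -> -A <= clampR A v <= A.
Proof. intros HA. unfold clampR, Rmax, Rmin. repeat destruct Rle_dec; lra. Qed.

Lemma clamp_id A v : -A <= v <= A -> clampR A v = v.
Proof. intros H. unfold clampR, Rmax, Rmin. repeat destruct Rle_dec; lra. Qed.

Lemma sqrt_lip a b : Rabs (sqrt a - sqrt b) <= sqrt (Rabs (a - b)).
Proof.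
  assert (Hgen : forall a b, b <= a -> Rabs (sqrt a - sqrt b) <= sqrt (Rabs (a - b))).
  { clear a b. intros a b Hab.
    pose proof (sqrt_le_1_alt b a Hab) as Hs.
    rewrite Rabs_pos_eq by lra. rewrite Rabs_pos_eq by lra.
    destruct (Rle_dec 0 b) as [Hb|Hb].
    - assert (Hs2 : sqrt a <= sqrt b + sqrt (a - b)).
      { apply Rsqr_incr_0_var.
        + rewrite Rsqr_sqrt by lra. unfold Rsqr.
          pose proof (sqrt_sqrt b Hb). pose proof (sqrt_sqrt (a - b) ltac:(lra)).
          pose proof (sqrt_pos b). pose proof (sqrt_pos (a-b)). nra.
        + pose proof (sqrt_pos b). pose proof (sqrt_pos (a-b)). lra. }
      lra.
    - rewrite (sqrt_neg_0 b) by lra. rewrite Rminus_0_r.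
      apply sqrt_le_1_alt. lra. }
  destruct (Rle_dec b a) as [H|H].
  - apply Hgen; lra.
  - rewrite Rabs_minus_sym, (Rabs_minus_sym a b). apply Hgen; lra.
Qed.

Lemma evt_disk (L : R) (f : R -> R -> R) : 0 < L ->
  (forall x y, x ^ 2 + y ^ 2 <= L ^ 2 ->
    filterlim (fun p : R * R => f (fst p) (snd p))
       (within (in_cdisk L) (locally (x, y))) (locally (f x y))) ->
  exists x y, x ^ 2 + y ^ 2 <= L ^ 2 /\
    forall u v, u ^ 2 + v ^ 2 <= L ^ 2 -> f u v <= f x y.
Proof.
  intros HL Hf.
  set (cl := fun x => clampR L x).
  set (c := fun x => sqrt (L ^ 2 - x ^ 2)).
  set (Py := fun x y => clampR (c (cl x)) y).
  assert (Hcl : forall x, -L <= cl x <= L) by (intros; apply clamp_in; lra).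
  assert (Hc0 : forall x, 0 <= c x) by (intros; apply sqrt_pos).
  assert (Hin : forall x y, cl x ^ 2 + Py x y ^ 2 <= L ^ 2).
  { intros x y. pose proof (clamp_in (c (cl x)) y (Hc0 _)) as H1.
    fold (Py x y) in H1.
    assert (Hcc : c (cl x) ^ 2 = L ^ 2 - cl x ^ 2).
    { unfold c. rewrite pow2_sqrt; [ring|]. specialize (Hcl x). nra. }
    specialize (Hc0 (cl x)). nra. }
  set (g := fun x y => f (cl x) (Py x y)).
  assert (Hg : forall x y, continuity_2d_pt g x y).
  { intros x y eps.
    destruct (within_eps L f (cl x) (Py x y) (Hf _ _ (Hin x y)) eps (cond_pos eps)) as [d1 [Hd1 H1]].
    set (d2 := Rmin (d1 / 2) (d1 ^ 2 / (16 * L))).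
    assert (Hd2 : 0 < d2).
    { apply Rmin_glb_lt; [lra|]. apply Rdiv_lt_0_compat; nra. }
    exists (mkposreal _ Hd2). intros u v Hu Hv. simpl in Hu, Hv.
    unfold g. apply H1; [apply Hin| |].
    - eapply Rle_lt_trans; [|apply Rlt_le_trans with d2; [exact Hu|]].
      + unfold cl. pose proof (clamp_lip L L u x ltac:(lra) ltac:(lra)).
        rewrite Rminus_diag, Rabs_R0 in H. lra.
      + unfold d2. eapply Rle_trans; [apply Rmin_l|lra].
    - unfold Py. eapply Rle_lt_trans; [apply clamp_lip; apply Hc0|].
      assert (Hcu : Rabs (c (cl u) - c (cl x)) <= d1 / 2).
      { unfold c. eapply Rle_trans; [apply sqrt_lip|].
        assert (Hq : Rabs (L ^ 2 - cl u ^ 2 - (L ^ 2 - cl x ^ 2)) <= d1 ^ 2 / 4).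
        { replace (L ^ 2 - cl u ^ 2 - (L ^ 2 - cl x ^ 2)) with ((cl x - cl u) * (cl x + cl u)) by ring.
          rewrite Rabs_mult.
          assert (E1 : Rabs (cl x - cl u) <= d2).
          { unfold cl. pose proof (clamp_lip L L x u ltac:(lra) ltac:(lra)).
            rewrite Rminus_diag, Rabs_R0 in H. rewrite Rabs_minus_sym in Hu. lra. }
          assert (E2 : Rabs (cl x + cl u) <= 2 * L).
          { pose proof (Hcl x); pose proof (Hcl u). unfold Rabs; destruct Rcase_abs; lra. }
          assert (E3 : d2 <= d1 ^ 2 / (16 * L)) by (unfold d2; apply Rmin_r).
          assert (E4 : d1 ^ 2 / (16 * L) * (2 * L) = d1 ^ 2 / 8) by (field; lra).
          pose proof (Rabs_pos (cl x - cl u)). pose proof (Rabs_pos (cl x + cl u)).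
          assert (Rabs (cl x - cl u) * Rabs (cl x + cl u) <= d1 ^ 2 / (16 * L) * (2 * L)).
          { apply Rmult_le_compat; lra. }
          nra. }
        replace (d1 / 2) with (sqrt (d1 ^ 2 / 4)).
        - apply sqrt_le_1_alt. exact Hq.
        - replace (d1 ^ 2 / 4) with ((d1/2) ^ 2) by field. apply sqrt_pow2. lra. }
      assert (d2 <= d1 / 2) by (unfold d2; apply Rmin_l). lra. }
  destruct (evt_rect g L ltac:(lra) Hg) as [xM [yM [HxM [HyM Hmax]]]].
  exists (cl xM), (Py xM yM). split; [apply Hin|].
  intros u v Huv.
  assert (Hu : -L <= u <= L) by (split; nra).
  assert (Hcu : cl u = u) by (apply clamp_id; exact Hu).
  assert (Hv : - c u <= v <= c u).
  { assert (c u ^ 2 = L ^ 2 - u ^ 2).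
    { unfold c. rewrite pow2_sqrt; [ring|]. nra. }
    pose proof (Hc0 u). split; nra. }
  assert (Hpv : Py u v = v) by (unfold Py; rewrite Hcu; apply clamp_id; exact Hv).
  specialize (Hmax u v Hu ltac:(split; nra)). unfold g in Hmax. rewrite Hcu, Hpv in Hmax.
  exact Hmax.
Qed.

Lemma deriv_pos_right (g : R -> R) x l : is_derive g x l -> 0 < l ->
  exists eta, 0 < eta /\ forall t, x < t < x + eta -> g x < g t.
Proof.
  intros H Hl. apply is_derive_Reals in H.
  destruct (H (l/2) ltac:(lra)) as [d Hd].
  exists d. split; [apply cond_pos|]. intros t Ht.
  specialize (Hd (t - x) ltac:(lra)).
  replace (x + (t - x)) with t in Hd by ring.
  assert (Habs : Rabs (t - x) < d) by (rewrite Rabs_pos_eq; lra).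
  specialize (Hd Habs).
  apply Rabs_def2 in Hd. destruct Hd as [_ Hd].
  assert (Hq : 0 < (g t - g x) / (t - x)) by lra.
  assert (Hp : 0 < t - x) by lra.
  assert (0 < (g t - g x) / (t - x) * (t - x)) by (apply Rmult_lt_0_compat; lra).
  field_simplify in H0; lra.
Qed.

Lemma deriv_neg_left (g : R -> R) x l : is_derive g x l -> l < 0 ->
  exists eta, 0 < eta /\ forall t, x - eta < t < x -> g x < g t.
Proof.
  intros H Hl. apply is_derive_Reals in H.
  destruct (H (-l/2) ltac:(lra)) as [d Hd].
  exists d. split; [apply cond_pos|]. intros t Ht.
  specialize (Hd (t - x) ltac:(lra)).
  replace (x + (t - x)) with t in Hd by ring.
  assert (Habs : Rabs (t - x) < d) by (rewrite Rabs_left; lra).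
  specialize (Hd Habs).
  apply Rabs_def2 in Hd. destruct Hd as [Hd _].
  assert (Hq : (g t - g x) / (t - x) < 0) by lra.
  assert (Hp : 0 < x - t) by lra.
  assert (0 < - ((g t - g x) / (t - x)) * (x - t)) by (apply Rmult_lt_0_compat; lra).
  replace (- ((g t - g x) / (t - x)) * (x - t)) with (g t - g x) in H0 by (field; lra).
  lra.
Qed.

Lemma deriv_at_max (g : R -> R) x d : 0 < d ->
  (forall t, Rabs (t - x) < d -> g t <= g x) -> ex_derive g x -> Derive g x = 0.
Proof.
  intros Hd Hmax Hg. pose proof (Derive_correct _ _ Hg) as H.
  destruct (Rtotal_order (Derive g x) 0) as [Hl|[Hl|Hl]]; auto.
  - destruct (deriv_neg_left g x _ H Hl) as [e [He He']].
    set (t := x - Rmin e d / 2).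
    assert (0 < Rmin e d) by (apply Rmin_glb_lt; lra).
    assert (Rmin e d <= e) by apply Rmin_l. assert (Rmin e d <= d) by apply Rmin_r.
    specialize (He' t ltac:(unfold t; lra)). specialize (Hmax t ltac:(unfold t; rewrite Rabs_left; lra)). lra.
  - destruct (deriv_pos_right g x _ H Hl) as [e [He He']].
    set (t := x + Rmin e d / 2).
    assert (0 < Rmin e d) by (apply Rmin_glb_lt; lra).
    assert (Rmin e d <= e) by apply Rmin_l. assert (Rmin e d <= d) by apply Rmin_r.
    specialize (He' t ltac:(unfold t; lra)). specialize (Hmax t ltac:(unfold t; rewrite Rabs_pos_eq; lra)). lra.
Qed.

Lemma lemma_1d (g G : R -> R) x d D : 0 < d ->
  (forall t, Rabs (t - x) < d -> g t <= g x) ->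
  (forall t, Rabs (t - x) < d -> ex_derive g t) ->
  (forall t, Rabs (t - x) < d -> 0 < G t) ->
  is_derive (fun t => G t * Derive g t) x D -> D <= 0.
Proof.
  intros Hd Hmax Hder HG HD.
  assert (H0 : Derive g x = 0).
  { apply (deriv_at_max g x d Hd Hmax). apply Hder. rewrite Rminus_diag, Rabs_R0; lra. }
  destruct (Rle_dec D 0) as [|Hn]; auto. exfalso.
  destruct (deriv_pos_right _ x D HD ltac:(lra)) as [e [He He']].
  rewrite H0, Rmult_0_r in He'.
  set (e' := Rmin e d).
  assert (0 < e') by (apply Rmin_glb_lt; lra).
  assert (e' <= e) by apply Rmin_l. assert (e' <= d) by apply Rmin_r.
  assert (Hpos : forall t, x < t < x + e' -> 0 < Derive g t).
  { intros t Ht. specialize (He' t ltac:(lra)).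
    assert (0 < G t) by (apply HG; rewrite Rabs_pos_eq; lra).
    destruct (Rle_dec (Derive g t) 0); [|lra].
    assert (G t * Derive g t <= 0).
    { nra. }
    lra. }
  set (t1 := x + e' / 2).
  destruct (MVT_cor2 g (Derive g) x t1 ltac:(unfold t1; lra)) as [c [Hc1 Hc2]].
  { intros c Hc. apply is_derive_Reals. apply Derive_correct. apply Hder.
    unfold t1 in Hc. rewrite Rabs_pos_eq; lra. }
  assert (Hgt : g t1 <= g x) by (apply Hmax; unfold t1; rewrite Rabs_pos_eq; lra).
  specialize (Hpos c ltac:(unfold t1 in Hc2; lra)).
  assert (0 < Derive g c * (t1 - x)) by (apply Rmult_lt_0_compat; unfold t1; lra).
  lra.
Qed.

Lemma exd_plus (f g : R -> R) x : ex_derive f x -> ex_derive g x -> ex_derive (fun t => f t + g t) x.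
Proof. intros. apply (ex_derive_plus (K:=R_AbsRing) (V:=R_NormedModule) f g); auto. Qed.
Lemma exd_minus (f g : R -> R) x : ex_derive f x -> ex_derive g x -> ex_derive (fun t => f t - g t) x.
Proof. intros. apply (ex_derive_minus (K:=R_AbsRing) (V:=R_NormedModule) f g); auto. Qed.
Lemma exd_scal (f : R -> R) c x : ex_derive f x -> ex_derive (fun t => c * f t) x.
Proof. intros. apply (ex_derive_scal f c); auto. Qed.
Lemma isd_plus (f g : R -> R) x a b : is_derive f x a -> is_derive g x b -> is_derive (fun t => f t + g t) x (a + b).
Proof. intros. apply (is_derive_plus (K:=R_AbsRing) (V:=R_NormedModule) f g); auto. Qed.
Lemma isd_minus (f g : R -> R) x a b : is_derive f x a -> is_derive g x b -> is_derive (fun t => f t - g t) x (a - b).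
Proof. intros. apply (is_derive_minus (K:=R_AbsRing) (V:=R_NormedModule) f g); auto. Qed.
Lemma isd_scal (f : R -> R) c x a : is_derive f x a -> is_derive (fun t => c * f t) x (c * a).
Proof. intros. apply (is_derive_scal f x c); auto. Qed.
Lemma isd_id x : is_derive (fun t : R => t) x 1.
Proof. apply (is_derive_id (K:=R_AbsRing)). Qed.

Lemma isd_mult (f g : R -> R) x a b : is_derive f x a -> is_derive g x b ->
  is_derive (fun t => f t * g t) x (a * g x + f x * b).
Proof. intros. apply (is_derive_mult (K:=R_AbsRing) f g); auto. intros; apply Rmult_comm. Qed.

Definition phi0 (r s : R) := r - sqrt (r ^ 2 - s).
Definition Gt (Rad Srad h u : R) := h + phi0 Srad (Rabs u) + phi0 Rad (Rabs u).
Definition Phic (Rad Srad h L c q : R) := RInt (fun u => c / Gt Rad Srad h u ^ 3) (L ^ 2) q.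
Definition Wc (Rad Srad h L c x y : R) := Phic Rad Srad h L c (x ^ 2 + y ^ 2).

Lemma gamma_Gt Rad Srad h x y : gamma Rad Srad h x y = Gt Rad Srad h (x ^ 2 + y ^ 2).
Proof.
  unfold gamma, gamma_t, gamma_b, Gt, phi0.
  rewrite Rabs_pos_eq by nra.
  replace (Srad ^ 2 - x ^ 2 - y ^ 2) with (Srad ^ 2 - (x ^ 2 + y ^ 2)) by ring.
  replace (Rad ^ 2 - x ^ 2 - y ^ 2) with (Rad ^ 2 - (x ^ 2 + y ^ 2)) by ring.
  ring.
Qed.

Lemma cont_sqrt_all x : continuity_pt sqrt x.
Proof. apply continuity_pt_filterlim. apply continuous_sqrt. Qed.

Lemma cont_phi0 r u : continuity_pt (fun u => phi0 r (Rabs u)) u.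
Proof.
  unfold phi0.
  apply continuity_pt_minus.
  - apply continuity_pt_const. intros a b; reflexivity.
  - apply (continuity_pt_comp (fun u => r ^ 2 - Rabs u) sqrt).
    + apply continuity_pt_minus.
      * apply continuity_pt_const. intros a b; reflexivity.
      * apply Rcontinuity_abs.
    + apply cont_sqrt_all.
Qed.

Lemma cont_Gt Rad Srad h u : continuity_pt (Gt Rad Srad h) u.
Proof.
  unfold Gt. apply continuity_pt_plus; [apply continuity_pt_plus|].
  - apply continuity_pt_const. intros a b; reflexivity.
  - apply cont_phi0.
  - apply cont_phi0.
Qed.

Lemma phi0_nonneg r s : 0 < r -> 0 <= s -> 0 <= phi0 r s.
Proof.
  intros Hr Hs. unfold phi0.
  assert (sqrt (r ^ 2 - s) <= r).
  { destruct (Rle_dec 0 (r^2 - s)).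
    - apply Rle_trans with (sqrt (r ^ 2)); [apply sqrt_le_1_alt; lra|rewrite sqrt_pow2; lra].
    - rewrite sqrt_neg_0 by lra. lra. }
  lra.
Qed.

Lemma Gt_ge_h Rad Srad h u : 0 < Rad -> 0 < Srad -> h <= Gt Rad Srad h u.
Proof.
  intros HR HS. unfold Gt.
  pose proof (phi0_nonneg Srad (Rabs u) HS (Rabs_pos u)).
  pose proof (phi0_nonneg Rad (Rabs u) HR (Rabs_pos u)). lra.
Qed.

Section S.
Variables (Rad Srad h L : R).
Hypotheses (HR : 0 < Rad) (HS : 0 < Srad) (Hh : 0 < h).

Lemma Gt_pos u : 0 < Gt Rad Srad h u.
Proof. pose proof (Gt_ge_h Rad Srad h u HR HS). lra. Qed.

Lemma cont_f c u : continuity_pt (fun u => c / Gt Rad Srad h u ^ 3) u.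
Proof.
  apply continuity_pt_div.
  - apply continuity_pt_const. intros a b; reflexivity.
  - apply (continuity_pt_comp (Gt Rad Srad h) (fun x => x ^ 3)).
    + apply cont_Gt.
    + apply derivable_continuous_pt. apply derivable_pt_pow.
  - pose proof (Gt_pos u). apply pow_nonzero. lra.
Qed.

Lemma Phic_deriv c q : is_derive (Phic Rad Srad h L c) q (c / Gt Rad Srad h q ^ 3).
Proof.
  unfold Phic. apply (is_derive_RInt (V:=R_NormedModule) (fun u => c / Gt Rad Srad h u ^ 3)
     (fun q => RInt (fun u => c / Gt Rad Srad h u ^ 3) (L ^ 2) q) (L ^ 2) q).
  - exists (mkposreal 1 Rlt_0_1). intros b _. apply (RInt_correct (V:=R_CompleteNormedModule)).
    apply cont_ex_RInt. intros z _. apply cont_f.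
  - apply continuity_pt_filterlim. apply cont_f.
Qed.

Lemma Phic_L2 c : Phic Rad Srad h L c (L ^ 2) = 0.
Proof. unfold Phic. rewrite RInt_point. reflexivity. Qed.

Lemma Wc_dx c x y : is_derive (fun t => Wc Rad Srad h L c t y) x
   (2 * x * c / Gt Rad Srad h (x ^ 2 + y ^ 2) ^ 3).
Proof.
  unfold Wc.
  eapply is_derive_ext; [intros t; reflexivity|].
  replace (2 * x * c / Gt Rad Srad h (x ^ 2 + y ^ 2) ^ 3) with
    ((2 * x) * (c / Gt Rad Srad h (x ^ 2 + y ^ 2) ^ 3)) by (field; pose proof (Gt_pos (x^2+y^2)); lra).
  apply (is_derive_comp (Phic Rad Srad h L c) (fun t => t ^ 2 + y ^ 2)).
  - apply Phic_deriv.
  - auto_derive; [auto|ring].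
Qed.

Lemma Wc_dy c x y : is_derive (fun t => Wc Rad Srad h L c x t) y
   (2 * y * c / Gt Rad Srad h (x ^ 2 + y ^ 2) ^ 3).
Proof.
  unfold Wc.
  replace (2 * y * c / Gt Rad Srad h (x ^ 2 + y ^ 2) ^ 3) with
    ((2 * y) * (c / Gt Rad Srad h (x ^ 2 + y ^ 2) ^ 3)) by (field; pose proof (Gt_pos (x^2+y^2)); lra).
  apply (is_derive_comp (Phic Rad Srad h L c) (fun t => x ^ 2 + t ^ 2)).
  - apply Phic_deriv.
  - auto_derive; [auto|ring].
Qed.

Lemma Wc_dx_eq c x y : dx (Wc Rad Srad h L c) x y = 2 * x * c / Gt Rad Srad h (x ^ 2 + y ^ 2) ^ 3.
Proof. unfold dx. apply is_derive_unique. apply Wc_dx. Qed.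

Lemma Wc_dy_eq c x y : dy (Wc Rad Srad h L c) x y = 2 * y * c / Gt Rad Srad h (x ^ 2 + y ^ 2) ^ 3.
Proof. unfold dy. apply is_derive_unique. apply Wc_dy. Qed.

Lemma Wc_flux_x c x y : is_derive (fun t => gamma Rad Srad h t y ^ 3 * dx (Wc Rad Srad h L c) t y) x (2 * c).
Proof.
  apply (is_derive_ext (fun t => 2 * c * t)).
  - intros t. rewrite Wc_dx_eq, gamma_Gt. pose proof (Gt_pos (t^2+y^2)).
    cut (2 * c * t = Gt Rad Srad h (t ^ 2 + y ^ 2) ^ 3 * (2 * t * c / Gt Rad Srad h (t ^ 2 + y ^ 2) ^ 3) :> R); [auto|field; lra].
  - auto_derive; [auto|ring].
Qed.

Lemma Wc_flux_y c x y : is_derive (fun t => gamma Rad Srad h x t ^ 3 * dy (Wc Rad Srad h L c) x t) y (2 * c).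
Proof.
  apply (is_derive_ext (fun t => 2 * c * t)).
  - intros t. rewrite Wc_dy_eq, gamma_Gt. pose proof (Gt_pos (x^2+t^2)).
    cut (2 * c * t = Gt Rad Srad h (x ^ 2 + t ^ 2) ^ 3 * (2 * t * c / Gt Rad Srad h (x ^ 2 + t ^ 2) ^ 3) :> R); [auto|field; lra].
  - auto_derive; [auto|ring].
Qed.

Lemma Wc_cont c x y : filterlim (fun p : R * R => Wc Rad Srad h L c (fst p) (snd p)) (locally (x, y))
   (locally (Wc Rad Srad h L c x y)).
Proof.
  apply (continuity_2d_pt_filterlim (Wc Rad Srad h L c)).
  unfold Wc. apply (continuity_1d_2d_pt_comp (Phic Rad Srad h L c) (fun u v => u ^ 2 + v ^ 2)).
  - apply (continuity_pt_filterlim (Phic Rad Srad h L c)).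
    apply (ex_derive_continuous (K:=R_AbsRing) (V:=R_NormedModule)). eexists. apply Phic_deriv.
  - apply continuity_2d_pt_plus; simpl; repeat apply continuity_2d_pt_mult;
      try apply continuity_2d_pt_id1; try apply continuity_2d_pt_id2; apply continuity_2d_pt_const.
Qed.

End S.

Lemma open_nbhd x y L : x ^ 2 + y ^ 2 < L ^ 2 ->
  exists d, 0 < d /\ forall t, Rabs (t - x) < d -> t ^ 2 + y ^ 2 < L ^ 2.
Proof.
  intros H.
  set (r := L ^ 2 - x ^ 2 - y ^ 2).
  exists (Rmin 1 (r / (2 * Rabs x + 1))). split.
  { apply Rmin_glb_lt; [lra|]. apply Rdiv_lt_0_compat; [unfold r; lra|pose proof (Rabs_pos x); lra]. }
  intros t Ht.
  assert (H1 : Rabs (t - x) < 1) by (eapply Rlt_le_trans; [exact Ht|apply Rmin_l]).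
  assert (H2 : Rabs (t - x) < r / (2 * Rabs x + 1)) by (eapply Rlt_le_trans; [exact Ht|apply Rmin_r]).
  assert (Hp : 0 < 2 * Rabs x + 1) by (pose proof (Rabs_pos x); lra).
  assert (H3 : Rabs (t - x) * (2 * Rabs x + 1) < r).
  { apply Rmult_lt_reg_r with (/ (2 * Rabs x + 1)). apply Rinv_0_lt_compat; lra.
    rewrite Rmult_assoc, Rinv_r by lra. rewrite Rmult_1_r. exact H2. }
  assert (H4 : Rabs (t ^ 2 - x ^ 2) <= Rabs (t - x) * (2 * Rabs x + 1)).
  { replace (t ^ 2 - x ^ 2) with ((t - x) * (t + x)) by ring. rewrite Rabs_mult.
    apply Rmult_le_compat_l; [apply Rabs_pos|].
    replace (t + x) with ((t - x) + 2 * x) by ring.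
    eapply Rle_trans; [apply Rabs_triang|]. rewrite Rabs_mult, (Rabs_pos_eq 2) by lra. lra. }
  unfold r in H3. apply Rabs_le_inv' in H4. lra.
Qed.

Section MP.
Variables (Rad Srad h L : R).
Hypotheses (HR : 0 < Rad) (HS : 0 < Srad) (Hh : 0 < h) (HL : 0 < L).

Lemma within_of_locally (F : R -> R -> R) x y :
  filterlim (fun p : R * R => F (fst p) (snd p)) (locally (x, y)) (locally (F x y)) ->
  filterlim (fun p : R * R => F (fst p) (snd p)) (within (in_cdisk L) (locally (x, y))) (locally (F x y)).
Proof.
  intros H. eapply filterlim_filter_le_1; [|exact H]. apply filter_le_within.
Qed.

Lemma within_plus (F G : R -> R -> R) x y :
  filterlim (fun p : R * R => F (fst p) (snd p)) (within (in_cdisk L) (locally (x, y))) (locally (F x y)) ->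
  filterlim (fun p : R * R => G (fst p) (snd p)) (within (in_cdisk L) (locally (x, y))) (locally (G x y)) ->
  filterlim (fun p : R * R => F (fst p) (snd p) + G (fst p) (snd p)) (within (in_cdisk L) (locally (x, y))) (locally (F x y + G x y)).
Proof.
  intros H1 H2.
  apply (filterlim_comp_2 (fun p : R * R => F (fst p) (snd p)) (fun p : R * R => G (fst p) (snd p)) Rplus H1 H2).
  apply (filterlim_plus (V:=R_NormedModule) (F x y) (G x y)).
Qed.

Lemma maxp (v : R -> R -> R) :
  (forall x y, x ^ 2 + y ^ 2 <= L ^ 2 ->
     filterlim (fun p : R * R => v (fst p) (snd p))
       (within (in_cdisk L) (locally (x, y))) (locally (v x y))) ->
  (forall x y, x ^ 2 + y ^ 2 = L ^ 2 -> v x y = 0) ->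
  (forall x y, x ^ 2 + y ^ 2 < L ^ 2 ->
     ex_derive (fun t => v t y) x /\
     ex_derive (fun t => v x t) y /\
     ex_derive (fun t => gamma Rad Srad h t y ^ 3 * dx v t y) x /\
     ex_derive (fun t => gamma Rad Srad h x t ^ 3 * dy v x t) y /\
     Derive (fun t => gamma Rad Srad h t y ^ 3 * dx v t y) x
       + Derive (fun t => gamma Rad Srad h x t ^ 3 * dy v x t) y = 0) ->
  forall x y, x ^ 2 + y ^ 2 < L ^ 2 -> v x y <= 0.
Proof.
  intros Hc Hb Hp x0 y0 H0.
  destruct (Rle_dec (v x0 y0) 0) as [|Hn]; auto. exfalso.
  set (Z := Wc Rad Srad h L (1/2)).
  set (z0 := Z x0 y0).
  set (eps := v x0 y0 / (2 * (Rabs z0 + 1))).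
  assert (Heps : 0 < eps) by (unfold eps; apply Rdiv_lt_0_compat; [lra|pose proof (Rabs_pos z0); lra]).
  assert (Hez : eps * Rabs z0 <= v x0 y0 / 2).
  { unfold eps. pose proof (Rabs_pos z0).
    apply Rle_trans with (v x0 y0 / (2 * (Rabs z0 + 1)) * (Rabs z0 + 1)).
    - apply Rmult_le_compat_l; [left; apply Rdiv_lt_0_compat; lra|lra].
    - right. field. lra. }
  set (ve := fun u w => v u w + eps * Z u w).
  assert (Hvec : forall x y, x ^ 2 + y ^ 2 <= L ^ 2 ->
     filterlim (fun p : R * R => ve (fst p) (snd p)) (within (in_cdisk L) (locally (x, y))) (locally (ve x y))).
  { intros x y Hxy. unfold ve. apply (within_plus v (fun u w => eps * Z u w)); [apply Hc; exact Hxy|].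
    apply (within_of_locally (fun u w => eps * Z u w) x y).
    apply (continuity_2d_pt_filterlim (fun u w => eps * Z u w)).
    apply continuity_2d_pt_mult; [apply continuity_2d_pt_const|].
    apply continuity_2d_pt_filterlim. unfold Z. apply Wc_cont; assumption. }
  destruct (evt_disk L ve HL Hvec) as [xs [ys [Hs Hmax]]].
  assert (Hv0 : 0 < ve xs ys).
  { specialize (Hmax x0 y0 ltac:(lra)). unfold ve in *. fold z0 in Hmax.
    assert (- (eps * Rabs z0) <= eps * z0).
    { assert (- Rabs z0 <= z0) by (unfold Rabs; destruct Rcase_abs; lra). nra. }
    lra. }
  destruct (Rle_lt_or_eq_dec _ _ Hs) as [Hin|Hbd].
  2: { assert (ve xs ys = 0).
       { unfold ve, Z, Wc. rewrite Hb by exact Hbd. rewrite Hbd, Phic_L2. ring. }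
       lra. }
  destruct (open_nbhd xs ys L Hin) as [d1 [Hd1 Hn1]].
  destruct (open_nbhd ys xs L ltac:(lra)) as [d2 [Hd2 Hn2]].
  destruct (Hp xs ys Hin) as [_ [_ [Hfx [Hfy Hsum]]]].
  assert (HDx : Derive (fun t => gamma Rad Srad h t ys ^ 3 * dx v t ys) xs + eps <= 0).
  { apply (lemma_1d (fun t => ve t ys) (fun t => gamma Rad Srad h t ys ^ 3) xs d1); [exact Hd1| | | |].
    - intros t Ht. apply Hmax. pose proof (Hn1 t Ht). lra.
    - intros t Ht. unfold ve. apply exd_plus.
      + apply (Hp t ys (Hn1 t Ht)).
      + apply exd_scal. eexists. apply Wc_dx; assumption.
    - intros t _. rewrite gamma_Gt. apply pow_lt. apply Gt_pos; assumption.
    - apply (is_derive_ext_loc (fun t => gamma Rad Srad h t ys ^ 3 * dx v t ys + eps * t)).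
      + exists (mkposreal d1 Hd1). intros t Ht. simpl in Ht.
        change (Rabs (t - xs) < d1) in Ht.
        assert (Hd : Derive (fun t0 => ve t0 ys) t = dx v t ys + eps * (2 * t * (1/2) / Gt Rad Srad h (t ^ 2 + ys ^ 2) ^ 3)).
        { apply is_derive_unique. unfold ve. apply isd_plus.
          - apply Derive_correct. apply (Hp t ys (Hn1 t Ht)).
          - apply isd_scal. apply Wc_dx; assumption. }
        rewrite Hd, gamma_Gt. pose proof (Gt_pos Rad Srad h HR HS Hh (t ^ 2 + ys ^ 2)).
        cut (Gt Rad Srad h (t ^ 2 + ys ^ 2) ^ 3 * dx v t ys + eps * t =
             Gt Rad Srad h (t ^ 2 + ys ^ 2) ^ 3 * (dx v t ys + eps * (2 * t * (1 / 2) / Gt Rad Srad h (t ^ 2 + ys ^ 2) ^ 3)) :> R);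
          [auto|field; lra].
      + apply isd_plus.
        * apply Derive_correct. exact Hfx.
        * replace eps with (eps * 1) at 2 by ring. apply isd_scal. apply isd_id. }
  assert (HDy : Derive (fun t => gamma Rad Srad h xs t ^ 3 * dy v xs t) ys + eps <= 0).
  { apply (lemma_1d (fun t => ve xs t) (fun t => gamma Rad Srad h xs t ^ 3) ys d2); [exact Hd2| | | |].
    - intros t Ht. apply Hmax. pose proof (Hn2 t Ht). lra.
    - intros t Ht. unfold ve. apply exd_plus.
      + apply (Hp xs t ltac:(pose proof (Hn2 t Ht); lra)).
      + apply exd_scal. eexists. apply Wc_dy; assumption.
    - intros t _. rewrite gamma_Gt. apply pow_lt. apply Gt_pos; assumption.
    - apply (is_derive_ext_loc (fun t => gamma Rad Srad h xs t ^ 3 * dy v xs t + eps * t)).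
      + exists (mkposreal d2 Hd2). intros t Ht. simpl in Ht.
        change (Rabs (t - ys) < d2) in Ht.
        assert (Hd : Derive (fun t0 => ve xs t0) t = dy v xs t + eps * (2 * t * (1/2) / Gt Rad Srad h (xs ^ 2 + t ^ 2) ^ 3)).
        { apply is_derive_unique. unfold ve. apply isd_plus.
          - apply Derive_correct. apply (Hp xs t ltac:(pose proof (Hn2 t Ht); lra)).
          - apply isd_scal. apply Wc_dy; assumption. }
        rewrite Hd, gamma_Gt. pose proof (Gt_pos Rad Srad h HR HS Hh (xs ^ 2 + t ^ 2)).
        cut (Gt Rad Srad h (xs ^ 2 + t ^ 2) ^ 3 * dy v xs t + eps * t =
             Gt Rad Srad h (xs ^ 2 + t ^ 2) ^ 3 * (dy v xs t + eps * (2 * t * (1 / 2) / Gt Rad Srad h (xs ^ 2 + t ^ 2) ^ 3)) :> R);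
          [auto|field; lra].
      + apply isd_plus.
        * apply Derive_correct. exact Hfy.
        * replace eps with (eps * 1) at 2 by ring. apply isd_scal. apply isd_id. }
  lra.
Qed.

End MP.

Section U.
Variables (Rad Srad h L : R).
Hypotheses (HR : 0 < Rad) (HS : 0 < Srad) (Hh : 0 < h) (HL : 0 < L).

Definition Sol (w : R -> R -> R) (s : R) : Prop :=
  (forall x y, x ^ 2 + y ^ 2 <= L ^ 2 ->
     filterlim (fun p : R * R => w (fst p) (snd p))
       (within (in_cdisk L) (locally (x, y))) (locally (w x y))) /\
  (forall x y, x ^ 2 + y ^ 2 = L ^ 2 -> w x y = 0) /\
  (forall x y, x ^ 2 + y ^ 2 < L ^ 2 ->
     ex_derive (fun t => w t y) x /\
     ex_derive (fun t => w x t) y /\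
     ex_derive (fun t => gamma Rad Srad h t y ^ 3 * dx w t y) x /\
     ex_derive (fun t => gamma Rad Srad h x t ^ 3 * dy w x t) y /\
     Derive (fun t => gamma Rad Srad h t y ^ 3 * dx w t y) x
       + Derive (fun t => gamma Rad Srad h x t ^ 3 * dy w x t) y = s).

Lemma sol_of_is_solution f0 w : is_solution (gamma Rad Srad h) L f0 w -> Sol w (-12 * f0).
Proof.
  intros [H1 [H2 H3]]. split; [exact H1|split; [exact H2|]].
  intros x y Hxy. destruct (H3 x y Hxy) as [A [B [C [D E]]]].
  repeat split; auto. lra.
Qed.

Lemma sol_Wc c : Sol (Wc Rad Srad h L c) (4 * c).
Proof.
  split; [|split].
  - intros x y _. apply (within_of_locally L (Wc Rad Srad h L c) x y). apply Wc_cont; assumption.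
  - intros x y Hxy. unfold Wc. rewrite Hxy. apply Phic_L2.
  - intros x y _. repeat split.
    + eexists. apply Wc_dx; assumption.
    + eexists. apply Wc_dy; assumption.
    + eexists. apply Wc_flux_x; assumption.
    + eexists. apply Wc_flux_y; assumption.
    + assert (E1 : Derive (fun t : R => gamma Rad Srad h t y ^ 3 * dx (Wc Rad Srad h L c) t y) x = 2 * c)
        by (apply is_derive_unique; apply Wc_flux_x; assumption).
      assert (E2 : Derive (fun t : R => gamma Rad Srad h x t ^ 3 * dy (Wc Rad Srad h L c) x t) y = 2 * c)
        by (apply is_derive_unique; apply Wc_flux_y; assumption).
      rewrite E1, E2. ring.
Qed.

Lemma sol_le w1 w2 s : Sol w1 s -> Sol w2 s ->
  forall x y, x ^ 2 + y ^ 2 < L ^ 2 -> w1 x y <= w2 x y.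
Proof.
  intros [C1 [B1 D1]] [C2 [B2 D2]] x y Hxy.
  set (v := fun u w => w1 u w + (-1) * w2 u w).
  cut (v x y <= 0); [unfold v; lra|].
  apply (maxp Rad Srad h L HR HS Hh HL v); [| | |exact Hxy].
  - intros u w Huw. unfold v.
    apply (within_plus L w1 (fun u w => -1 * w2 u w)); [apply C1; exact Huw|].
    specialize (C2 u w Huw).
    apply (filterlim_comp _ _ _ (fun p : R * R => w2 (fst p) (snd p)) (fun z => -1 * z) _ _ _ C2).
    apply (continuity_pt_filterlim (fun z => -1 * z)).
    apply continuity_pt_scal. apply derivable_continuous_pt. apply derivable_pt_id.
  - intros u w Huw. unfold v. rewrite B1, B2 by exact Huw. ring.
  - intros u w Huw.
    destruct (D1 u w Huw) as [a1 [b1 [c1 [d1 e1]]]].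
    destruct (D2 u w Huw) as [a2 [b2 [c2 [d2 e2]]]].
    destruct (open_nbhd u w L Huw) as [r1 [Hr1 Hn1]].
    destruct (open_nbhd w u L ltac:(lra)) as [r2 [Hr2 Hn2]].
    assert (Hx : is_derive (fun t => gamma Rad Srad h t w ^ 3 * dx v t w) u
        (Derive (fun t => gamma Rad Srad h t w ^ 3 * dx w1 t w) u + (-1) *
         Derive (fun t => gamma Rad Srad h t w ^ 3 * dx w2 t w) u)).
    { apply (is_derive_ext_loc (fun t => gamma Rad Srad h t w ^ 3 * dx w1 t w + (-1) * (gamma Rad Srad h t w ^ 3 * dx w2 t w))).
      - exists (mkposreal r1 Hr1). intros t Ht. change (Rabs (t - u) < r1) in Ht.
        specialize (Hn1 t Ht).
        destruct (D1 t w Hn1) as [a1' _]. destruct (D2 t w Hn1) as [a2' _].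
        assert (E : dx v t w = dx w1 t w + (-1) * dx w2 t w).
        { unfold dx, v. apply is_derive_unique. apply isd_plus.
          - apply Derive_correct. exact a1'.
          - apply isd_scal. apply Derive_correct. exact a2'. }
        rewrite E. lra.
      - apply isd_plus; [apply Derive_correct; exact c1|apply isd_scal; apply Derive_correct; exact c2]. }
    assert (Hy : is_derive (fun t => gamma Rad Srad h u t ^ 3 * dy v u t) w
        (Derive (fun t => gamma Rad Srad h u t ^ 3 * dy w1 u t) w + (-1) *
         Derive (fun t => gamma Rad Srad h u t ^ 3 * dy w2 u t) w)).
    { apply (is_derive_ext_loc (fun t => gamma Rad Srad h u t ^ 3 * dy w1 u t + (-1) * (gamma Rad Srad h u t ^ 3 * dy w2 u t))).
      - exists (mkposreal r2 Hr2). intros t Ht. change (Rabs (t - w) < r2) in Ht.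
        assert (Hn : u ^ 2 + t ^ 2 < L ^ 2) by (specialize (Hn2 t Ht); lra).
        destruct (D1 u t Hn) as [_ [b1' _]]. destruct (D2 u t Hn) as [_ [b2' _]].
        assert (E : dy v u t = dy w1 u t + (-1) * dy w2 u t).
        { unfold dy, v. apply is_derive_unique. apply isd_plus.
          - apply Derive_correct. exact b1'.
          - apply isd_scal. apply Derive_correct. exact b2'. }
        rewrite E. lra.
      - apply isd_plus; [apply Derive_correct; exact d1|apply isd_scal; apply Derive_correct; exact d2]. }
    repeat split.
    + unfold v. apply exd_plus; [exact a1|apply exd_scal; exact a2].
    + unfold v. apply exd_plus; [exact b1|apply exd_scal; exact b2].
    + eexists. exact Hx.
    + eexists. exact Hy.
    + assert (E1 : Derive (fun t : R => gamma Rad Srad h t w ^ 3 * dx v t w) u = Derive (fun t => gamma Rad Srad h t w ^ 3 * dx w1 t w) u + (-1) *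
         Derive (fun t => gamma Rad Srad h t w ^ 3 * dx w2 t w) u) by (apply is_derive_unique; exact Hx).
      assert (E2 : Derive (fun t : R => gamma Rad Srad h u t ^ 3 * dy v u t) w = Derive (fun t => gamma Rad Srad h u t ^ 3 * dy w1 u t) w + (-1) *
         Derive (fun t => gamma Rad Srad h u t ^ 3 * dy w2 u t) w) by (apply is_derive_unique; exact Hy).
      rewrite E1, E2. lra.
Qed.

Lemma uniq f0 w : is_solution (gamma Rad Srad h) L f0 w ->
  forall x y, x ^ 2 + y ^ 2 < L ^ 2 -> w x y = Wc Rad Srad h L (-3 * f0) x y.
Proof.
  intros Hw x y Hxy.
  pose proof (sol_of_is_solution f0 w Hw) as S1.
  pose proof (sol_Wc (-3 * f0)) as S2.
  replace (4 * (-3 * f0)) with (-12 * f0) in S2 by ring.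
  apply Rle_antisym; [apply (sol_le _ _ _ S1 S2)|apply (sol_le _ _ _ S2 S1)]; exact Hxy.
Qed.

End U.

Definition cc (L x : R) := sqrt (L ^ 2 - x ^ 2).
Definition qq (L x t : R) := x ^ 2 * (1 - t ^ 2) + L ^ 2 * t ^ 2.
Definition MK (L : R) (K : R -> R) (x : R) := RInt (fun t => K (qq L x t)) (-1) 1.

Lemma cont_cc L x : continuity_pt (cc L) x.
Proof.
  unfold cc. apply (continuity_pt_comp (fun x => L ^ 2 - x ^ 2) sqrt).
  - apply derivable_continuous_pt. apply derivable_pt_minus.
    apply derivable_pt_const. apply derivable_pt_pow.
  - apply cont_sqrt_all.
Qed.

Lemma cc_sq L x : -L <= x <= L -> cc L x ^ 2 = L ^ 2 - x ^ 2.
Proof. intros H. unfold cc. rewrite pow2_sqrt; [ring|nra]. Qed.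

Lemma cc_pos L x : 0 <= cc L x.
Proof. apply sqrt_pos. Qed.

Lemma cc_le L x : 0 < L -> cc L x <= L.
Proof.
  intros HL. unfold cc. destruct (Rle_dec 0 (L^2 - x^2)).
  - apply Rle_trans with (sqrt (L ^ 2)); [apply sqrt_le_1_alt; nra|rewrite sqrt_pow2; lra].
  - rewrite sqrt_neg_0 by lra. lra.
Qed.

Lemma cc_opp L x : cc L (- x) = cc L x.
Proof. unfold cc. f_equal. ring. Qed.

Lemma qq_opp L x t : qq L (- x) t = qq L x t.
Proof. unfold qq. ring. Qed.

Lemma c2d_qq L x t : continuity_2d_pt (qq L) x t.
Proof.
  unfold qq. apply continuity_2d_pt_plus; apply continuity_2d_pt_mult; simpl;
  repeat first [apply continuity_2d_pt_mult | apply continuity_2d_pt_minus | apply continuity_2d_pt_id1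
         | apply continuity_2d_pt_id2 | apply continuity_2d_pt_const].
Qed.

Section Rad.
Variables (L : R) (k : R -> R).
Hypotheses (HL : 0 < L) (Hk : forall q, continuity_pt k q).

Lemma MK_cont x : continuity_pt (MK L k) x.
Proof.
  unfold MK. apply (param_cont (fun x t => k (qq L x t))); [lra| |].
  - intros t _. apply continuity_1d_2d_pt_comp; [apply Hk|apply c2d_qq].
  - exists 1. split; [lra|]. intros v _. apply cont_all_ex_RInt. intros z.
    apply (continuity_pt_comp (qq L v) k); [|apply Hk].
    unfold qq. apply derivable_continuous_pt.
    apply derivable_pt_plus; apply derivable_pt_mult;
    repeat first [apply derivable_pt_minus | apply derivable_pt_const | apply derivable_pt_pow].
Qed.

Lemma inner_sub x : -L <= x <= L ->
  RInt (fun y => k (x ^ 2 + y ^ 2)) (- cc L x) (cc L x) = cc L x * MK L k x.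
Proof.
  intros Hx.
  assert (Hex : ex_RInt (fun y => k (x ^ 2 + y ^ 2)) (cc L x * (-1) + 0) (cc L x * 1 + 0)).
  { apply cont_all_ex_RInt. intros z. apply (continuity_pt_comp (fun y => x ^ 2 + y ^ 2) k); [|apply Hk].
    apply derivable_continuous_pt. apply derivable_pt_plus; [apply derivable_pt_const|apply derivable_pt_pow]. }
  pose proof (RInt_comp_lin (V:=R_CompleteNormedModule) (fun y => k (x ^ 2 + y ^ 2)) (cc L x) 0 (-1) 1 Hex) as E.
  replace (cc L x * -1 + 0) with (- cc L x) in E by ring.
  replace (cc L x * 1 + 0) with (cc L x) in E by ring.
  rewrite <- E. unfold MK.
  rewrite <- RIscal.
  - apply RInt_ext. intros t _. unfold scal; simpl. unfold mult; simpl. f_equal. f_equal.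
    unfold qq. transitivity (x ^ 2 + cc L x ^ 2 * t ^ 2); [ring|].
    rewrite cc_sq by lra. ring.
  - apply cont_all_ex_RInt. intros z. apply (continuity_pt_comp (qq L x) k); [|apply Hk].
    unfold qq. apply derivable_continuous_pt.
    apply derivable_pt_plus; apply derivable_pt_mult;
    repeat first [apply derivable_pt_minus | apply derivable_pt_const | apply derivable_pt_pow].
Qed.

End Rad.

Lemma even_int (g : R -> R) L : (forall x, g (- x) = g x) -> (forall z, continuity_pt g z) ->
  RInt g (- L) 0 = RInt g 0 L.
Proof.
  intros He Hc.
  assert (Hex : ex_RInt g ((-1) * 0 + 0) ((-1) * L + 0)) by (apply cont_all_ex_RInt; exact Hc).
  pose proof (RInt_comp_lin (V:=R_CompleteNormedModule) g (-1) 0 0 L Hex) as E.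
  replace (-1 * 0 + 0) with 0 in E by ring. replace (-1 * L + 0) with (- L) in E by ring.
  rewrite <- (RIswap g 0 (-L)) by (apply cont_all_ex_RInt; exact Hc).
  rewrite <- E.
  transitivity (- RInt (fun y => -1 * g y) 0 L).
  { f_equal. apply RInt_ext. intros y _. unfold scal; simpl; unfold mult; simpl.
    replace (-1 * y + 0) with (- y) by ring. rewrite He. ring. }
  rewrite RIscal by (apply cont_all_ex_RInt; exact Hc). change (@eq R (- (-1 * RInt g 0 L)) (RInt g 0 L)). ring.
Qed.

Lemma area L : 0 < L -> RInt (fun x => cc L x * 2) (- L) L = PI * L ^ 2.
Proof.
  intros HL.
  assert (Hc : forall z, continuity_pt (fun x => cc L x * 2) z).
  { intros z. apply continuity_pt_mult; [apply cont_cc|apply continuity_pt_const; intros a b; reflexivity]. }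
  pose proof (RInt_comp (V:=R_CompleteNormedModule) (fun x => cc L x * 2) (fun t => L * sin t) (fun t => L * cos t)
     (- (PI / 2)) (PI / 2)) as E.
  cbv beta in E. replace (L * sin (- (PI / 2))) with (- L) in E by (rewrite sin_neg, sin_PI2; ring).
  replace (L * sin (PI / 2)) with L in E by (rewrite sin_PI2; ring).
  rewrite <- E.
  - transitivity (RInt (fun t => L ^ 2 * (1 + cos (2 * t))) (- (PI / 2)) (PI / 2)).
    + apply RInt_ext. intros t Ht.
      rewrite Rmin_left in Ht by (pose proof PI_RGT_0; lra). rewrite Rmax_right in Ht by (pose proof PI_RGT_0; lra).
      pose proof (cos_gt_0 t ltac:(lra) ltac:(lra)) as Hcos.
      unfold scal; simpl; unfold mult; simpl. unfold cc.
      replace (L ^ 2 - (L * sin t) ^ 2) with ((L * cos t) ^ 2).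
      * rewrite sqrt_pow2 by nra. rewrite cos_2a_cos. ring.
      * pose proof (sin2_cos2 t). unfold Rsqr in H. nra.
    + set (Fa := fun t => L ^ 2 * (t + sin (2 * t) / 2)).
      assert (Hd : is_RInt (fun t => L ^ 2 * (1 + cos (2 * t))) (- (PI / 2)) (PI / 2)
                     (minus (Fa (PI / 2)) (Fa (- (PI / 2))))).
      { apply (is_RInt_derive (V:=R_CompleteNormedModule) Fa).
        -- intros x _. unfold Fa. auto_derive; [auto|]. field.
        -- intros x _. apply continuity_pt_filterlim.
           apply derivable_continuous_pt. apply derivable_pt_mult; [apply derivable_pt_const|].
           apply derivable_pt_plus; [apply derivable_pt_const|].
           apply (derivable_pt_comp (fun t => 2 * t) cos).
           apply derivable_pt_mult; [apply derivable_pt_const|apply derivable_pt_id].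
           apply derivable_pt_cos. }
      apply (is_RInt_unique (V:=R_CompleteNormedModule)) in Hd. rewrite Hd.
      unfold minus, plus, opp, Fa; simpl.
      replace (2 * (PI / 2)) with PI by field. replace (2 * - (PI / 2)) with (- PI) by field.
      rewrite sin_neg, sin_PI. field.
  - intros x _. apply continuity_pt_filterlim. apply Hc.
  - intros x _. split.
    + auto_derive; [auto|ring].
    + apply continuity_pt_filterlim. apply derivable_continuous_pt.
      apply derivable_pt_mult; [apply derivable_pt_const|apply derivable_pt_cos].
Qed.

Lemma qq_pos L x t : 0 < L -> x <> 0 -> -1 <= t <= 1 -> 0 < qq L x t.
Proof.
  intros HL Hx Ht. unfold qq.
  assert (0 < x ^ 2) by (apply pow2_gt_0; exact Hx).
  assert (0 <= 1 - t ^ 2) by nra.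
  destruct (Req_dec t 0) as [->|Ht0].
  - nra.
  - assert (0 < t ^ 2) by (apply pow2_gt_0; exact Ht0).
    assert (0 < L ^ 2) by nra. nra.
Qed.

Lemma qq_pos2 L u v : 0 < u <= L -> 0 < qq L u v.
Proof.
  intros Hu. unfold qq.
  replace (u ^ 2 * (1 - v ^ 2) + L ^ 2 * v ^ 2) with (u ^ 2 + (L ^ 2 - u ^ 2) * v ^ 2) by ring.
  assert (0 <= L ^ 2 - u ^ 2) by nra. assert (0 <= v ^ 2) by nra. nra.
Qed.

Lemma cont_qq_t L x t : continuity_pt (qq L x) t.
Proof.
  unfold qq. apply derivable_continuous_pt.
  apply derivable_pt_plus; apply derivable_pt_mult;
  repeat first [apply derivable_pt_minus | apply derivable_pt_const | apply derivable_pt_pow].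
Qed.

Section Rad2.
Variables (L : R) (k : R -> R).
Hypotheses (HL : 0 < L) (Hk : forall q, continuity_pt k q).

Definition Fk (q : R) := RInt k 0 q.
Definition kap := Fk (L ^ 2) / L ^ 2.
Definition Hf (q : R) := Fk q / q - kap.
Definition dHf (q : R) := k q / q - Fk q / q ^ 2.

Lemma Fk_deriv q : is_derive Fk q (k q).
Proof.
  unfold Fk. apply (is_derive_RInt (V:=R_NormedModule) k (fun q => RInt k 0 q) 0 q).
  - exists (mkposreal 1 Rlt_0_1). intros b _. apply (RInt_correct (V:=R_CompleteNormedModule)).
    apply cont_all_ex_RInt. exact Hk.
  - apply continuity_pt_filterlim. apply Hk.
Qed.

Lemma Fk_cont q : continuity_pt Fk q.
Proof.
  apply continuity_pt_filterlim. apply (ex_derive_continuous (K:=R_AbsRing) (V:=R_NormedModule)).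
  eexists. apply Fk_deriv.
Qed.

Lemma Hf_deriv q : 0 < q -> is_derive Hf q (dHf q).
Proof.
  intros Hq. unfold Hf, dHf.
  replace (k q / q - Fk q / q ^ 2) with ((k q * q - Fk q * 1) / q ^ 2 - 0) by (field; lra).
  apply isd_minus.
  - apply (is_derive_div Fk (fun x => x)); [apply Fk_deriv|apply isd_id|lra].
  - auto_derive; auto.
Qed.

Lemma Hf_cont q : 0 < q -> continuity_pt Hf q.
Proof.
  intros Hq. apply continuity_pt_filterlim. apply (ex_derive_continuous (K:=R_AbsRing) (V:=R_NormedModule)).
  eexists. apply Hf_deriv. exact Hq.
Qed.

Lemma dHf_cont q : 0 < q -> continuity_pt dHf q.
Proof.
  intros Hq. unfold dHf. apply continuity_pt_minus.
  - apply continuity_pt_div; [apply Hk|apply derivable_continuous_pt; apply derivable_pt_id|lra].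
  - apply continuity_pt_div; [apply Fk_cont|apply derivable_continuous_pt; apply derivable_pt_pow|].
    apply pow_nonzero. lra.
Qed.

Lemma Hf_L2 : Hf (L ^ 2) = 0.
Proof. unfold Hf, kap. ring. Qed.

Lemma kH q : 0 < q -> k q - kap = Hf q + q * dHf q.
Proof. intros Hq. unfold Hf, dHf. field. lra. Qed.

Lemma Hf_bound : exists K, 0 <= K /\ forall q, 0 < q <= L ^ 2 -> Rabs (Hf q) <= K.
Proof.
  destruct (bounded_continuity k 0 (L ^ 2)) as [M HM].
  { intros x _. apply continuity_pt_filterlim. apply Hk. }
  assert (HM' : forall x, 0 <= x <= L ^ 2 -> Rabs (k x) <= M) by (intros x Hx; left; apply HM; exact Hx).
  assert (HM0 : 0 <= M) by (pose proof (HM' 0 ltac:(split; nra)); pose proof (Rabs_pos (k 0)); lra).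
  exists (M + Rabs kap). split; [pose proof (Rabs_pos kap); lra|].
  intros q Hq. unfold Hf.
  assert (HF : Rabs (Fk q) <= (q - 0) * M).
  { unfold Fk. apply abs_RInt_le_const; [lra|apply cont_all_ex_RInt; exact Hk|].
    intros t Ht. apply HM'. lra. }
  assert (HF' : Rabs (Fk q / q) <= M).
  { unfold Rdiv. rewrite Rabs_mult, Rabs_inv, (Rabs_pos_eq q) by lra.
    apply Rmult_le_reg_r with q; [lra|]. rewrite Rmult_assoc, Rinv_l by lra. lra. }
  eapply Rle_trans; [apply Rabs_triang|]. rewrite Rabs_Ropp. lra.
Qed.

Lemma cont_Hq x t : x <> 0 -> -1 <= t <= 1 -> continuity_pt (fun t => Hf (qq L x t)) t.
Proof.
  intros Hx Ht. apply (continuity_pt_comp (qq L x) Hf); [apply cont_qq_t|].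
  apply Hf_cont. apply qq_pos; assumption.
Qed.

Lemma ex_MH x : x <> 0 -> ex_RInt (fun t => Hf (qq L x t)) (-1) 1.
Proof.
  intros Hx. apply cont_ex_RInt. intros z Hz.
  rewrite Rmin_left in Hz by lra. rewrite Rmax_right in Hz by lra. apply cont_Hq; assumption.
Qed.

Lemma ex_dH (g : R -> R) x : x <> 0 -> (forall t, continuity_pt g t) ->
  ex_RInt (fun t => g t * dHf (qq L x t)) (-1) 1.
Proof.
  intros Hx Hg. apply cont_ex_RInt. intros z Hz.
  rewrite Rmin_left in Hz by lra. rewrite Rmax_right in Hz by lra.
  apply continuity_pt_mult; [apply Hg|].
  apply (continuity_pt_comp (qq L x) dHf); [apply cont_qq_t|].
  apply dHf_cont. apply qq_pos; assumption.
Qed.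

End Rad2.


Section Rad3.
Variables (L : R) (k : R -> R).
Hypotheses (HL : 0 < L) (Hk : forall q, continuity_pt k q).

Lemma dq u v : 0 < qq L u v ->
  is_derive (fun z => Hf L k (qq L z v)) u (2 * u * (1 - v ^ 2) * dHf k (qq L u v)).
Proof.
  intros Hq. apply (is_derive_comp (Hf L k) (fun z => qq L z v)).
  - apply (Hf_deriv L k Hk); assumption.
  - unfold qq. auto_derive; [auto|ring].
Qed.

Lemma cont_poly2 : forall x t, continuity_2d_pt (fun u v => 2 * u * (1 - v ^ 2)) x t.
Proof.
  intros x t. simpl.
  repeat first [apply continuity_2d_pt_mult | apply continuity_2d_pt_minus | apply continuity_2d_pt_id1
         | apply continuity_2d_pt_id2 | apply continuity_2d_pt_const].
Qed.

Lemma MH_deriv x : 0 < x < L ->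
  is_derive (MK L (Hf L k)) x (RInt (fun t => (2 * x * (1 - t ^ 2)) * dHf k (qq L x t)) (-1) 1).
Proof.
  intros Hx.
  assert (Hnb : forall x0, Rabs (x0 - x) < Rmin (x / 2) (L - x) -> 0 < x0 < L).
  { intros x0 H0. assert (Rmin (x/2) (L - x) <= x/2) by apply Rmin_l.
    assert (Rmin (x/2) (L - x) <= L - x) by apply Rmin_r.
    unfold Rabs in H0; destruct Rcase_abs in H0; lra. }
  assert (Hd0 : 0 < Rmin (x / 2) (L - x)) by (apply Rmin_glb_lt; lra).
  pose proof (is_derive_RInt_param (fun u t => Hf L k (qq L u t)) (-1) 1 x) as HP.
  unfold MK.
  replace (RInt (fun t => (2 * x * (1 - t ^ 2)) * dHf k (qq L x t)) (-1) 1) with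
    (RInt (fun t => Derive (fun u => Hf L k (qq L u t)) x) (-1) 1).
  - apply HP.
    + exists (mkposreal _ Hd0). intros x0 Hx0 t Ht. change (Rabs (x0 - x) < Rmin (x / 2) (L - x)) in Hx0.
      specialize (Hnb x0 Hx0). rewrite Rmin_left in Ht by lra. rewrite Rmax_right in Ht by lra.
      eexists. apply dq. apply qq_pos; [lra|lra|exact Ht].
    + intros t Ht. rewrite Rmin_left in Ht by lra. rewrite Rmax_right in Ht by lra.
      apply (continuity_2d_pt_ext_loc (fun u v => 2 * u * (1 - v ^ 2) * dHf k (qq L u v))).
      * exists (mkposreal _ Hd0). intros u v Hu _. simpl in Hu.
        specialize (Hnb u Hu). symmetry. apply is_derive_unique. apply dq. apply qq_pos2. lra.
      * apply continuity_2d_pt_mult; [apply cont_poly2|].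
        apply continuity_1d_2d_pt_comp; [|apply c2d_qq]. apply (dHf_cont k Hk).
        apply qq_pos; [lra|lra|exact Ht].
    + exists (mkposreal _ Hd0). intros y Hy. change (Rabs (y - x) < Rmin (x / 2) (L - x)) in Hy.
      specialize (Hnb y Hy). apply (ex_MH L k HL Hk). lra.
  - apply RInt_ext. intros t Ht. rewrite Rmin_left in Ht by lra. rewrite Rmax_right in Ht by lra.
    apply is_derive_unique. apply dq. apply qq_pos; lra.
Qed.

Lemma IBP x : x <> 0 -> -L <= x <= L ->
  RInt (fun t => Hf L k (qq L x t) + (2 * (L ^ 2 - x ^ 2)) * (t ^ 2 * dHf k (qq L x t))) (-1) 1 = 0.
Proof.
  intros Hx0 Hx.
  set (G := fun t => t * Hf L k (qq L x t)).
  assert (Hd : is_RInt (fun t => Hf L k (qq L x t) + (2 * (L ^ 2 - x ^ 2)) * (t ^ 2 * dHf k (qq L x t))) (-1) 1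
              (minus (G 1) (G (-1)))).
  { apply (is_RInt_derive (V:=R_CompleteNormedModule) G).
    - intros t Ht. rewrite Rmin_left in Ht by lra. rewrite Rmax_right in Ht by lra.
      assert (Hq : 0 < qq L x t) by (apply qq_pos; assumption).
      unfold G.
      replace (Hf L k (qq L x t) + 2 * (L ^ 2 - x ^ 2) * (t ^ 2 * dHf k (qq L x t))) with
        (1 * Hf L k (qq L x t) + t * ((2 * t * (L ^ 2 - x ^ 2)) * dHf k (qq L x t))) by ring.
      apply (is_derive_mult (K:=R_AbsRing) (fun t => t) (fun t => Hf L k (qq L x t))).
      + apply isd_id.
      + apply (is_derive_comp (Hf L k) (qq L x)).
        * apply (Hf_deriv L k Hk); assumption.
        * unfold qq. auto_derive; [auto|ring].
      + intros; apply Rmult_comm.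
    - intros t Ht. rewrite Rmin_left in Ht by lra. rewrite Rmax_right in Ht by lra.
      apply continuity_pt_filterlim. apply continuity_pt_plus.
      + apply (cont_Hq L k HL Hk); assumption.
      + apply continuity_pt_mult; [apply continuity_pt_const; intros a b; reflexivity|].
        apply continuity_pt_mult; [apply derivable_continuous_pt; apply derivable_pt_pow|].
        apply (continuity_pt_comp (qq L x) (dHf k)); [apply cont_qq_t|].
        apply (dHf_cont k Hk). apply qq_pos; assumption. }
  apply (is_RInt_unique (V:=R_CompleteNormedModule)) in Hd. rewrite Hd.
  unfold minus, plus, opp, G; simpl.
  replace (qq L x 1) with (L ^ 2) by (unfold qq; ring).
  replace (qq L x (-1)) with (L ^ 2) by (unfold qq; ring).
  rewrite Hf_L2. ring.
Qed.



End Rad3.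

Section Rad4.
Variables (L : R) (k : R -> R).
Hypotheses (HL : 0 < L) (Hk : forall q, continuity_pt k q).

Definition Fn (x : R) := x * cc L x * MK L (Hf L k) x / 2.

Lemma cont_dHq x t : x <> 0 -> -1 <= t <= 1 -> continuity_pt (fun t => dHf k (qq L x t)) t.
Proof.
  intros Hx Ht. apply (continuity_pt_comp (qq L x) (dHf k)); [apply cont_qq_t|].
  apply (dHf_cont k Hk). apply qq_pos; assumption.
Qed.

Lemma exI (g : R -> R) : (forall t, -1 <= t <= 1 -> continuity_pt g t) -> ex_RInt g (-1) 1.
Proof.
  intros H. apply cont_ex_RInt. intros z Hz.
  rewrite Rmin_left in Hz by lra. rewrite Rmax_right in Hz by lra. apply H; exact Hz.
Qed.

Lemma cpow t : continuity_pt (fun t : R => t ^ 2) t.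
Proof. apply derivable_continuous_pt; apply derivable_pt_pow. Qed.
Lemma cconst c t : continuity_pt (fun _ : R => c) t.
Proof. apply continuity_pt_const. intros a b; reflexivity. Qed.

Lemma Fn_deriv x : 0 < x < L -> is_derive Fn x (cc L x * (MK L k x - 2 * kap L k)).
Proof.
  intros Hx.
  set (c := cc L x).
  assert (Hc2 : c ^ 2 = L ^ 2 - x ^ 2) by (apply cc_sq; lra).
  assert (Hc0 : 0 < c) by (unfold c, cc; apply sqrt_lt_R0; nra).
  assert (Dcc : is_derive (cc L) x (- x / c)).
  { unfold c, cc. auto_derive; [nra|]. replace (L * (L * 1) + - (x * (x * 1))) with (L ^ 2 - x ^ 2) by ring. field. apply Rgt_not_eq. apply sqrt_lt_R0. nra. }
  pose proof (MH_deriv L k HL Hk x Hx) as DM.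
  set (MH := MK L (Hf L k) x).
  set (Mp := RInt (fun t => (2 * x * (1 - t ^ 2)) * dHf k (qq L x t)) (-1) 1).
  fold MH Mp in DM.
  set (A := RInt (fun t => dHf k (qq L x t)) (-1) 1).
  set (B := RInt (fun t => t ^ 2 * dHf k (qq L x t)) (-1) 1).
  assert (Hx0 : x <> 0) by lra.
  assert (exA : ex_RInt (fun t => dHf k (qq L x t)) (-1) 1) by (apply exI; intros; apply cont_dHq; auto).
  assert (exB : ex_RInt (fun t => t ^ 2 * dHf k (qq L x t)) (-1) 1).
  { apply exI; intros; apply continuity_pt_mult; [apply cpow|apply cont_dHq; auto]. }
  assert (exH : ex_RInt (fun t => Hf L k (qq L x t)) (-1) 1) by (apply (ex_MH L k HL Hk); auto).
  assert (E1 : Mp = 2 * x * A - 2 * x * B).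
  { unfold Mp. rewrite (RIext _ (fun t => 2 * x * dHf k (qq L x t) - 2 * x * (t ^ 2 * dHf k (qq L x t)))).
    - rewrite RIminus; [|apply exRI_scal; exact exA|apply exRI_scal; exact exB].
      rewrite RIscal by exact exA. rewrite RIscal by exact exB. reflexivity.
    - intros t _. ring. }
  assert (E2 : MH + 2 * (L ^ 2 - x ^ 2) * B = 0).
  { pose proof (IBP L k HL Hk x Hx0 ltac:(lra)) as HI.
    rewrite RIplus in HI; [|exact exH|apply exRI_scal; exact exB].
    rewrite RIscal in HI by exact exB. exact HI. }
  assert (E3 : MK L k x - 2 * kap L k = MH + (x ^ 2 * A - x ^ 2 * B + L ^ 2 * B)).
  { assert (exk : ex_RInt (fun t => k (qq L x t)) (-1) 1).
    { apply exI; intros. apply (continuity_pt_comp (qq L x) k); [apply cont_qq_t|apply Hk]. }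
    transitivity (RInt (fun t => k (qq L x t) - kap L k) (-1) 1).
    { rewrite RIminus; [|exact exk|apply cont_all_ex_RInt; intros; apply cconst].
      rewrite RIconst. unfold MK. ring. }
    rewrite (RIext _ (fun t => Hf L k (qq L x t) + (x ^ 2 * dHf k (qq L x t) - x ^ 2 * (t ^ 2 * dHf k (qq L x t)) + L ^ 2 * (t ^ 2 * dHf k (qq L x t))))).
    - rewrite RIplus; [|exact exH|].
      + rewrite RIplus; [| |apply exRI_scal; exact exB].
        * rewrite RIminus; [|apply exRI_scal; exact exA|apply exRI_scal; exact exB].
          rewrite !RIscal by assumption. reflexivity.
        * apply exRI_minus; apply exRI_scal; assumption.
      + apply exRI_plus; [apply exRI_minus|]; apply exRI_scal; assumption.
    - intros t Ht. rewrite Rmin_left in Ht by lra. rewrite Rmax_right in Ht by lra.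
      rewrite kH by (apply qq_pos; lra). unfold qq. ring. }
  assert (HMH : MH = - (2 * (L ^ 2 - x ^ 2) * B)) by lra.
  replace (c * (MK L k x - 2 * kap L k)) with (/ 2 * ((1 * c + x * (- x / c)) * MH + (x * c) * Mp)).
  - apply (is_derive_ext (fun t => / 2 * (t * cc L t * MK L (Hf L k) t))).
    + intros t. unfold Fn. change (@eq R (/ 2 * (t * cc L t * MK L (Hf L k) t)) (t * cc L t * MK L (Hf L k) t / 2)). field.
    + apply isd_scal.
      assert (D1 : is_derive (fun t => t * cc L t) x (1 * c + x * (- x / c))).
      { apply (isd_mult (fun t => t) (cc L) x 1 (- x / c)); [apply isd_id|exact Dcc]. }
      apply (isd_mult (fun t => t * cc L t) (MK L (Hf L k)) x _ _ D1 DM).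
  - rewrite E3, E1, HMH. replace (L ^ 2) with (c ^ 2 + x ^ 2) by lra. field. lra.
Qed.

End Rad4.

Section Rad5.
Variables (L : R) (k : R -> R).
Hypotheses (HL : 0 < L) (Hk : forall q, continuity_pt k q).

Lemma MH_bound : exists K, 0 <= K /\ forall y, 0 < y <= L -> Rabs (MK L (Hf L k) y) <= 2 * K.
Proof.
  destruct (Hf_bound L k Hk) as [K [HK0 HK]].
  exists K. split; [exact HK0|]. intros y Hy.
  replace (2 * K) with ((1 - -1) * K) by ring.
  unfold MK. apply abs_RInt_le_const; [lra|apply (ex_MH L k HL Hk); lra|].
  intros t Ht. apply HK. split.
  - apply qq_pos; lra.
  - unfold qq. assert (y ^ 2 <= L ^ 2) by nra. assert (0 <= 1 - t ^ 2) by nra. nra.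
Qed.

Lemma f_cont x : continuity_pt (fun x => cc L x * (MK L k x - 2 * kap L k)) x.
Proof.
  apply continuity_pt_mult; [apply cont_cc|]. apply continuity_pt_minus; [apply (MK_cont L k Hk)|apply cconst].
Qed.

Lemma half_zero : RInt (fun x => cc L x * (MK L k x - 2 * kap L k)) 0 L = 0.
Proof.
  destruct MH_bound as [K [HK0 HK]].
  assert (Hb : forall y, 0 <= y <= L -> Rabs (Fn L k y) <= y * cc L y * K).
  { intros y Hy. destruct (Req_dec y 0) as [->|Hy0].
    - unfold Fn. rewrite !Rmult_0_l. unfold Rdiv. rewrite Rmult_0_l, Rabs_R0. lra.
    - unfold Fn. specialize (HK y ltac:(lra)).
      pose proof (cc_pos L y).
      unfold Rdiv. rewrite !Rabs_mult, (Rabs_pos_eq y) by lra. rewrite (Rabs_pos_eq (cc L y)) by lra.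
      rewrite Rabs_inv, (Rabs_pos_eq 2) by lra.
      assert (0 <= y * cc L y) by nra.
      assert (y * cc L y * Rabs (MK L (Hf L k) y) <= y * cc L y * (2 * K)) by (apply Rmult_le_compat_l; lra).
      lra. }
  assert (HF0 : Fn L k 0 = 0) by (unfold Fn; unfold Rdiv; rewrite !Rmult_0_l; reflexivity).
  assert (HFL : Fn L k L = 0).
  { assert (Hc : cc L L = 0) by (unfold cc; replace (L ^ 2 - L ^ 2) with 0 by ring; apply sqrt_0).
    unfold Fn. rewrite Hc. unfold Rdiv. rewrite Rmult_0_r, !Rmult_0_l. reflexivity. }
  rewrite (FTC_open (Fn L k) _ 0 L HL).
  - rewrite HF0, HFL. apply Rminus_0_r.
  - intros eps Heps. exists (eps / (L * K + 1)). split.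
    { apply Rdiv_lt_0_compat; [lra|]. nra. }
    intros y Hy Hy'. rewrite HF0, Rminus_0_r. rewrite Rminus_0_r, Rabs_pos_eq in Hy' by lra.
    eapply Rle_lt_trans; [apply Hb; exact Hy|].
    pose proof (cc_le L y HL). pose proof (cc_pos L y).
    apply Rle_lt_trans with (y * (L * K)).
    + rewrite Rmult_assoc. apply Rmult_le_compat_l; [lra|]. apply Rmult_le_compat_r; lra.
    + apply Rle_lt_trans with (eps / (L * K + 1) * (L * K)).
      * apply Rmult_le_compat_r; [nra|lra].
      * apply Rlt_le_trans with (eps / (L * K + 1) * (L * K + 1)).
        -- apply Rmult_lt_compat_l; [apply Rdiv_lt_0_compat; nra|lra].
        -- right. field. nra.
  - intros eps Heps. set (e := eps / (L * K + 1)).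
    assert (He : 0 < e) by (unfold e; apply Rdiv_lt_0_compat; nra).
    exists (e ^ 2 / (2 * L)). split; [apply Rdiv_lt_0_compat; nra|].
    intros y Hy Hy'. rewrite HFL, Rminus_0_r.
    rewrite Rabs_left1 in Hy' by lra.
    eapply Rle_lt_trans; [apply Hb; exact Hy|].
    pose proof (cc_pos L y).
    assert (Hc2 : cc L y ^ 2 < e ^ 2).
    { rewrite cc_sq by lra.
      assert (L ^ 2 - y ^ 2 <= 2 * L * (L - y)) by nra.
      assert (2 * L * (L - y) < 2 * L * (e ^ 2 / (2 * L))) by (apply Rmult_lt_compat_l; lra).
      replace (2 * L * (e ^ 2 / (2 * L))) with (e ^ 2) in H1 by (field; lra). lra. }
    assert (Hc : cc L y < e) by nra.
    apply Rle_lt_trans with (L * e * K).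
    + assert (y * cc L y <= L * e) by nra. apply Rmult_le_compat_r; lra.
    + apply Rle_lt_trans with (e * (L * K)); [right; ring|].
      apply Rlt_le_trans with (e * (L * K + 1)); [apply Rmult_lt_compat_l; lra|].
      right. unfold e. field. nra.
  - intros x Hx. apply Fn_deriv; assumption.
  - intros x _. apply f_cont.
Qed.

Lemma radial :
  RInt (fun x => RInt (fun y => k (x ^ 2 + y ^ 2)) (- cc L x) (cc L x)) (- L) L = PI * Fk k (L ^ 2).
Proof.
  rewrite (RIext _ (fun x => cc L x * (MK L k x - 2 * kap L k) + kap L k * (cc L x * 2))).
  - rewrite RIplus.
    + rewrite RIscal.
      * rewrite area by exact HL.
        rewrite <- (RIchasles _ (-L) 0 L).
        -- rewrite even_int.
           ++ rewrite half_zero. unfold kap. change (@eq R (0 + 0 + Fk k (L ^ 2) / L ^ 2 * (PI * L ^ 2)) (PI * Fk k (L ^ 2))). field. lra.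
           ++ intros x. rewrite cc_opp. f_equal. f_equal. unfold MK. apply RIext. intros t _. rewrite qq_opp. reflexivity.
           ++ apply f_cont.
        -- apply cont_all_ex_RInt. apply f_cont.
        -- apply cont_all_ex_RInt. apply f_cont.
      * apply cont_all_ex_RInt. intros z. apply continuity_pt_mult; [apply cont_cc|apply cconst].
    + apply cont_all_ex_RInt. apply f_cont.
    + apply exRI_scal. apply cont_all_ex_RInt. intros z. apply continuity_pt_mult; [apply cont_cc|apply cconst].
  - intros x Hx. rewrite Rmin_left in Hx by lra. rewrite Rmax_right in Hx by lra.
    rewrite (inner_sub L k Hk x) by lra. ring.
Qed.

End Rad5.

Lemma rad_est r q : 0 < r -> 0 <= q < r ^ 2 ->
  0 <= phi0 r q - q / (2 * r) - q ^ 2 / (8 * r ^ 3) <= q ^ 3 / (2 * r ^ 5).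
Proof.
  intros Hr Hq. unfold phi0.
  set (s := sqrt (r ^ 2 - q)).
  assert (Hs0 : 0 < s) by (unfold s; apply sqrt_lt_R0; lra).
  assert (Hs2 : s ^ 2 = r ^ 2 - q) by (unfold s; apply pow2_sqrt; lra).
  assert (Hsr : s <= r) by nra.
  assert (Hq' : q = r ^ 2 - s ^ 2) by lra.
  assert (E : r - s - q / (2 * r) - q ^ 2 / (8 * r ^ 3) = q ^ 3 * (3 * r + s) / (8 * r ^ 3 * (r + s) ^ 3)).
  { rewrite Hq'. field. split; nra. }
  assert (Hr3 : 0 < r ^ 3) by (apply pow_lt; lra).
  assert (Hrs3 : 0 < (r + s) ^ 3) by (apply pow_lt; lra).
  assert (Hq3 : 0 <= q ^ 3) by (apply pow_le; lra).
  rewrite E. split.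
  - apply Rdiv_le_0_compat; [apply Rmult_le_pos; lra|]. apply Rmult_lt_0_compat; [lra|exact Hrs3].
  - assert (Hb : (3 * r + s) / (8 * r ^ 3 * (r + s) ^ 3) <= 1 / (2 * r ^ 5)).
    { apply Rmult_le_reg_r with (8 * r ^ 3 * (r + s) ^ 3 * (2 * r ^ 5)).
      - assert (0 < r ^ 5) by (apply pow_lt; lra).
        apply Rmult_lt_0_compat; [apply Rmult_lt_0_compat; lra|lra].
      - replace ((3 * r + s) / (8 * r ^ 3 * (r + s) ^ 3) * (8 * r ^ 3 * (r + s) ^ 3 * (2 * r ^ 5))) with
          ((3 * r + s) * (2 * r ^ 5)) by (field; split; nra).
        replace (1 / (2 * r ^ 5) * (8 * r ^ 3 * (r + s) ^ 3 * (2 * r ^ 5))) with (8 * r ^ 3 * (r + s) ^ 3)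
          by (field; nra).
        assert (r ^ 2 * (r + s) <= (r + s) ^ 3) by nra.
        assert ((3 * r + s) * r ^ 2 <= 4 * r ^ 3) by nra.
        nra. }
    assert (0 <= q ^ 3) by (apply pow_le; lra).
    unfold Rdiv at 1. rewrite Rmult_assoc. 
    replace (q ^ 3 / (2 * r ^ 5)) with (q ^ 3 * (1 / (2 * r ^ 5))) by (field; nra).
    apply Rmult_le_compat_l; [lra|]. exact Hb.
Qed.

Lemma inv3_est A D : 0 < A -> 0 <= D ->
  0 <= 1 / (A + D) ^ 3 - 1 / A ^ 3 + 3 * D / A ^ 4 <= 6 * D ^ 2 / A ^ 5.
Proof.
  intros HA HD.
  assert (E : 1 / (A + D) ^ 3 - 1 / A ^ 3 + 3 * D / A ^ 4 =
              D ^ 2 * (6 * A ^ 2 + 8 * A * D + 3 * D ^ 2) / (A ^ 4 * (A + D) ^ 3)).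
  { field. split; lra. }
  assert (HA4 : 0 < A ^ 4) by (apply pow_lt; lra).
  assert (HAD : 0 < (A + D) ^ 3) by (apply pow_lt; lra).
  rewrite E. split.
  - apply Rdiv_le_0_compat; [|apply Rmult_lt_0_compat; lra].
    apply Rmult_le_pos; [apply pow2_ge_0|nra].
  - apply Rmult_le_reg_r with (A ^ 5 * (A + D) ^ 3).
    + assert (0 < A ^ 5) by (apply pow_lt; lra). apply Rmult_lt_0_compat; lra.
    + replace (D ^ 2 * (6 * A ^ 2 + 8 * A * D + 3 * D ^ 2) / (A ^ 4 * (A + D) ^ 3) * (A ^ 5 * (A + D) ^ 3))
        with (A * (D ^ 2 * (6 * A ^ 2 + 8 * A * D + 3 * D ^ 2))) by (field; split; lra).
      replace (6 * D ^ 2 / A ^ 5 * (A ^ 5 * (A + D) ^ 3)) with (6 * D ^ 2 * (A + D) ^ 3) by (field; lra).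
      assert (0 <= D ^ 2) by apply pow2_ge_0.
      assert (0 <= D ^ 3) by (apply pow_le; lra).
      assert (0 <= D ^ 4) by (apply pow_le; lra).
      assert (0 <= A * D) by nra.
      replace (A * (D ^ 2 * (6 * A ^ 2 + 8 * A * D + 3 * D ^ 2))) with
        (6 * A ^ 3 * D ^ 2 + 8 * A ^ 2 * D ^ 3 + 3 * A * D ^ 4) by ring.
      replace (6 * D ^ 2 * (A + D) ^ 3) with
        (6 * A ^ 3 * D ^ 2 + 18 * A ^ 2 * D ^ 3 + 18 * A * D ^ 4 + 6 * D ^ 5) by ring.
      assert (0 <= A ^ 2 * D ^ 3) by (apply Rmult_le_pos; [apply pow2_ge_0|lra]).
      assert (0 <= A * D ^ 4) by (apply Rmult_le_pos; lra).
      assert (0 <= D ^ 5) by (apply pow_le; lra).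
      lra.
Qed.

Section Asym.
Variables (Rad Srad L : R).
Hypotheses (HR : 0 < Rad) (HS : 0 < Srad) (HL : 0 < L) (HLm : L < Rmin Rad Srad).

Definition T := L ^ 2.
Definition aa := / Srad / 2 + / Rad / 2.
Definition bb := / (8 * Srad ^ 3) + / (8 * Rad ^ 3).
Definition K2 := / (2 * Srad ^ 5) + / (2 * Rad ^ 5).
Definition K1 := bb + K2 * T.
Definition Ce := 6 * K1 ^ 2 / aa ^ 5 + 3 * K2 / aa ^ 4.

Lemma T_lt : T < Rad ^ 2 /\ T < Srad ^ 2.
Proof.
  unfold T. assert (L < Rad) by (eapply Rlt_le_trans; [exact HLm|apply Rmin_l]).
  assert (L < Srad) by (eapply Rlt_le_trans; [exact HLm|apply Rmin_r]). split; nra.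
Qed.

Lemma aa_pos : 0 < aa.
Proof. unfold aa. assert (0 < / Srad) by (apply Rinv_0_lt_compat; lra).
  assert (0 < / Rad) by (apply Rinv_0_lt_compat; lra). lra. Qed.

Lemma bb_pos : 0 < bb.
Proof. unfold bb. assert (0 < / (8 * Srad ^ 3)) by (apply Rinv_0_lt_compat; apply Rmult_lt_0_compat; [lra|apply pow_lt; lra]).
  assert (0 < / (8 * Rad ^ 3)) by (apply Rinv_0_lt_compat; apply Rmult_lt_0_compat; [lra|apply pow_lt; lra]). lra. Qed.

Lemma K2_pos : 0 < K2.
Proof. unfold K2. assert (0 < / (2 * Srad ^ 5)) by (apply Rinv_0_lt_compat; apply Rmult_lt_0_compat; [lra|apply pow_lt; lra]).
  assert (0 < / (2 * Rad ^ 5)) by (apply Rinv_0_lt_compat; apply Rmult_lt_0_compat; [lra|apply pow_lt; lra]). lra. Qed.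

Lemma D_est h q : 0 <= q <= T ->
  0 <= (Gt Rad Srad h q - h - aa * q) - bb * q ^ 2 <= K2 * q ^ 3.
Proof.
  intros Hq. destruct T_lt as [HTR HTS].
  pose proof (rad_est Srad q HS ltac:(lra)) as E1.
  pose proof (rad_est Rad q HR ltac:(lra)) as E2.
  unfold Gt. rewrite Rabs_pos_eq by lra.
  replace (h + phi0 Srad q + phi0 Rad q - h - aa * q - bb * q ^ 2) with
    ((phi0 Srad q - q / (2 * Srad) - q ^ 2 / (8 * Srad ^ 3)) + (phi0 Rad q - q / (2 * Rad) - q ^ 2 / (8 * Rad ^ 3)))
    by (unfold aa, bb; field; split; lra).
  replace (K2 * q ^ 3) with (q ^ 3 / (2 * Srad ^ 5) + q ^ 3 / (2 * Rad ^ 5)) by (unfold K2; field; split; lra).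
  lra.
Qed.

Lemma e_bound h q : 0 < h -> 0 <= q <= T ->
  Rabs (q / Gt Rad Srad h q ^ 3 - q / (h + aa * q) ^ 3 + 3 * bb * q ^ 3 / (h + aa * q) ^ 4) <= Ce.
Proof.
  intros Hh Hq.
  pose proof aa_pos as Ha. pose proof bb_pos as Hb. pose proof K2_pos as HK2.
  set (A := h + aa * q).
  set (D := Gt Rad Srad h q - h - aa * q).
  assert (HA : 0 < A) by (unfold A; nra).
  pose proof (D_est h q Hq) as HD. fold D in HD.
  assert (HD0 : 0 <= D) by (assert (0 <= bb * q ^ 2) by (apply Rmult_le_pos; [lra|apply pow2_ge_0]); lra).
  assert (HK1 : D <= K1 * q ^ 2).
  { unfold K1. assert (H3 : q ^ 3 <= T * q ^ 2).
    { replace (q ^ 3) with (q * q ^ 2) by ring. apply Rmult_le_compat_r; [apply pow2_ge_0|lra]. }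
    assert (H4 : K2 * q ^ 3 <= K2 * (T * q ^ 2)) by (apply Rmult_le_compat_l; lra).
    replace ((bb + K2 * T) * q ^ 2) with (bb * q ^ 2 + K2 * (T * q ^ 2)) by ring.
    lra. }
  assert (HG : Gt Rad Srad h q = A + D) by (unfold D, A; ring).
  rewrite HG.
  pose proof (inv3_est A D HA HD0) as HI.
  assert (Eq : q / (A + D) ^ 3 - q / A ^ 3 + 3 * bb * q ^ 3 / A ^ 4 =
     q * (1 / (A + D) ^ 3 - 1 / A ^ 3 + 3 * D / A ^ 4) - 3 * q * (D - bb * q ^ 2) / A ^ 4).
  { field. split; lra. }
  rewrite Eq.
  assert (Hr : q <= A / aa) by (unfold A; apply Rmult_le_reg_r with aa; [lra|]; field_simplify; lra).
  assert (Hr' : q / A <= / aa).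
  { apply Rmult_le_reg_r with A; [lra|]. field_simplify; [|lra|lra].
    apply Rmult_le_reg_r with aa; [lra|]. field_simplify; [|lra]. unfold A. nra. }
  assert (Hq0 : 0 <= q / A) by (apply Rdiv_le_0_compat; lra).
  assert (T1 : 0 <= q * (1 / (A + D) ^ 3 - 1 / A ^ 3 + 3 * D / A ^ 4) <= 6 * K1 ^ 2 / aa ^ 5).
  { split; [apply Rmult_le_pos; lra|].
    apply Rle_trans with (q * (6 * D ^ 2 / A ^ 5)); [apply Rmult_le_compat_l; lra|].
    apply Rle_trans with (6 * K1 ^ 2 * (q / A) ^ 5).
    - replace (q * (6 * D ^ 2 / A ^ 5)) with (6 * (q * D ^ 2) / A ^ 5) by (field; lra).
      replace (6 * K1 ^ 2 * (q / A) ^ 5) with (6 * (K1 ^ 2 * q ^ 5) / A ^ 5) by (field; lra).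
      apply Rmult_le_compat_r; [left; apply Rinv_0_lt_compat; apply pow_lt; lra|].
      apply Rmult_le_compat_l; [lra|].
      replace (K1 ^ 2 * q ^ 5) with (q * (K1 * q ^ 2) ^ 2) by ring.
      apply Rmult_le_compat_l; [lra|]. apply pow_incr. lra.
    - apply Rle_trans with (6 * K1 ^ 2 * (/ aa) ^ 5).
      + apply Rmult_le_compat_l; [assert (0 <= K1 ^ 2) by apply pow2_ge_0; lra|apply pow_incr; lra].
      + right. field. lra. }
  assert (T2 : 0 <= 3 * q * (D - bb * q ^ 2) / A ^ 4 <= 3 * K2 / aa ^ 4).
  { assert (HA4 : 0 < A ^ 4) by (apply pow_lt; lra).
    split; [apply Rdiv_le_0_compat; [apply Rmult_le_pos; lra|lra]|].
    apply Rle_trans with (3 * K2 * (q / A) ^ 4).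
    - replace (3 * K2 * (q / A) ^ 4) with (3 * q * (K2 * q ^ 3) / A ^ 4) by (field; lra).
      apply Rmult_le_compat_r; [left; apply Rinv_0_lt_compat; lra|].
      apply Rmult_le_compat_l; lra.
    - apply Rle_trans with (3 * K2 * (/ aa) ^ 4).
      + apply Rmult_le_compat_l; [lra|apply pow_incr; lra].
      + right. field. lra. }
  unfold Ce. apply Rabs_le. split; lra.
Qed.

End Asym.

Section Asym2.
Variables (Rad Srad L : R).
Hypotheses (HR : 0 < Rad) (HS : 0 < Srad) (HL : 0 < L) (HLm : L < Rmin Rad Srad).

Let a := aa Rad Srad.
Let b := bb Rad Srad.
Let TT := T L.

Definition P2 (h q : R) := (ln (h + aa Rad Srad * q) + 3 * h / (h + aa Rad Srad * q)
   - 3 * h ^ 2 / (2 * (h + aa Rad Srad * q) ^ 2) + h ^ 3 / (3 * (h + aa Rad Srad * q) ^ 3)) / aa Rad Srad ^ 4.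

Lemma TT_pos : 0 < TT.
Proof. unfold TT, T. nra. Qed.

Lemma contA (f : R -> R) h : 0 < h -> (forall z, 0 <= z -> ex_derive f z) -> ex_RInt f 0 TT.
Proof.
  intros Hh Hf. pose proof TT_pos. apply cont_ex_RInt. intros z Hz.
  rewrite Rmin_left in Hz by lra. rewrite Rmax_right in Hz by lra.
  apply continuity_pt_filterlim. apply (ex_derive_continuous (K:=R_AbsRing) (V:=R_NormedModule)).
  apply Hf. lra.
Qed.

Lemma I1 h : 0 < h -> RInt (fun q => q / (h + a * q) ^ 3) 0 TT = TT ^ 2 / (2 * h * (h + a * TT) ^ 2).
Proof.
  intros Hh. pose proof (aa_pos Rad Srad HR HS) as Ha. fold a in Ha. pose proof TT_pos.
  set (F := fun q => q ^ 2 / (2 * h * (h + a * q) ^ 2)).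
  assert (Hd : is_RInt (fun q => q / (h + a * q) ^ 3) 0 TT (minus (F TT) (F 0))).
  { apply (is_RInt_derive (V:=R_CompleteNormedModule) F).
    + intros x Hx. rewrite Rmin_left in Hx by lra. rewrite Rmax_right in Hx by lra.
      assert (HA : 0 < h + a * x) by nra.
      unfold F. auto_derive; [apply Rgt_not_eq; repeat apply Rmult_lt_0_compat; lra|]. field. lra.
    + intros x Hx. rewrite Rmin_left in Hx by lra. rewrite Rmax_right in Hx by lra.
      assert (HA : 0 < h + a * x) by nra.
      apply (ex_derive_continuous (K:=R_AbsRing) (V:=R_NormedModule)). auto_derive. repeat split; apply Rgt_not_eq; repeat apply Rmult_lt_0_compat; lra. }
  apply (is_RInt_unique (V:=R_CompleteNormedModule)) in Hd. rewrite Hd.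
  unfold minus, plus, opp, F; simpl. field. nra.
Qed.

Lemma I2 h : 0 < h -> RInt (fun q => q ^ 3 / (h + a * q) ^ 4) 0 TT = P2 h TT - P2 h 0.
Proof.
  intros Hh. pose proof (aa_pos Rad Srad HR HS) as Ha. fold a in Ha. pose proof TT_pos.
  assert (Hd : is_RInt (fun q => q ^ 3 / (h + a * q) ^ 4) 0 TT (minus (P2 h TT) (P2 h 0))).
  { apply (is_RInt_derive (V:=R_CompleteNormedModule) (P2 h)).
    - intros x Hx. rewrite Rmin_left in Hx by lra. rewrite Rmax_right in Hx by lra.
      assert (HA : 0 < h + a * x) by nra.
      unfold P2. fold a. auto_derive; [repeat split; try apply Rgt_not_eq; repeat apply Rmult_lt_0_compat; lra|]. field. lra.
    - intros x Hx. rewrite Rmin_left in Hx by lra. rewrite Rmax_right in Hx by lra.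
      assert (HA : 0 < h + a * x) by nra.
      apply (ex_derive_continuous (K:=R_AbsRing) (V:=R_NormedModule)). auto_derive. repeat split; apply Rgt_not_eq; repeat apply Rmult_lt_0_compat; lra. }
  apply (is_RInt_unique (V:=R_CompleteNormedModule)) in Hd. rewrite Hd.
  unfold minus, plus, opp; simpl. ring.
Qed.

End Asym2.

Section Asym3.
Variables (Rad Srad L : R).
Hypotheses (HR : 0 < Rad) (HS : 0 < Srad) (HL : 0 < L) (HLm : L < Rmin Rad Srad).

Lemma asym : exists C, forall h, 0 < h <= 1 ->
  Rabs (RInt (fun q => q / Gt Rad Srad h q ^ 3) 0 (L ^ 2)
        - (1 / (2 * aa Rad Srad ^ 2 * h) + 3 * bb Rad Srad / aa Rad Srad ^ 4 * ln h)) <= C.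
Proof.
  set (a := aa Rad Srad). set (b := bb Rad Srad). set (TT := L ^ 2).
  pose proof (aa_pos Rad Srad HR HS) as Ha. fold a in Ha.
  pose proof (bb_pos Rad Srad HR HS) as Hb. fold b in Hb.
  assert (HT : 0 < TT) by (unfold TT; nra).
  assert (HaT : 0 < a * TT) by nra.
  exists ((1 + 2 * a * TT) / (2 * a ^ 2 * (a * TT) ^ 2)
          + 3 * b * ((Rabs (ln (a * TT)) + Rabs (ln (1 + a * TT)) + 10) / a ^ 4)
          + TT * Ce Rad Srad L).
  intros h Hh.
  set (A := fun q => h + a * q).
  set (e := fun q => q / Gt Rad Srad h q ^ 3 - q / A q ^ 3 + 3 * b * q ^ 3 / A q ^ 4).
  assert (HA : forall q, 0 <= q -> 0 < A q) by (intros q Hq; unfold A; nra).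
  assert (HGt : forall q, 0 < Gt Rad Srad h q) by (intros; apply Gt_pos; lra).
  assert (c1 : forall z, continuity_pt (fun q => q / Gt Rad Srad h q ^ 3) z).
  { intros z. apply continuity_pt_div.
    - apply derivable_continuous_pt; apply derivable_pt_id.
    - apply (continuity_pt_comp (Gt Rad Srad h) (fun x => x ^ 3)); [apply cont_Gt|].
      apply derivable_continuous_pt; apply derivable_pt_pow.
    - apply pow_nonzero. specialize (HGt z). lra. }
  assert (c2 : forall z, 0 <= z -> continuity_pt (fun q => q / A q ^ 3) z).
  { intros z Hz. specialize (HA z Hz). unfold A in *.
    apply (continuity_pt_filterlim (fun q => q / (h + a * q) ^ 3)).
    apply (ex_derive_continuous (K:=R_AbsRing) (V:=R_NormedModule) (fun q => q / (h + a * q) ^ 3)).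
    auto_derive. apply Rgt_not_eq. repeat apply Rmult_lt_0_compat; lra. }
  assert (c3 : forall z, 0 <= z -> continuity_pt (fun q => q ^ 3 / A q ^ 4) z).
  { intros z Hz. specialize (HA z Hz). unfold A in *.
    apply (continuity_pt_filterlim (fun q => q ^ 3 / (h + a * q) ^ 4)).
    apply (ex_derive_continuous (K:=R_AbsRing) (V:=R_NormedModule) (fun q => q ^ 3 / (h + a * q) ^ 4)).
    auto_derive. apply Rgt_not_eq. repeat apply Rmult_lt_0_compat; lra. }
  assert (ex1 : ex_RInt (fun q => q / A q ^ 3) 0 TT).
  { apply cont_ex_RInt. intros z Hz. rewrite Rmin_left in Hz by lra. apply c2. lra. }
  assert (ex2 : ex_RInt (fun q => q ^ 3 / A q ^ 4) 0 TT).
  { apply cont_ex_RInt. intros z Hz. rewrite Rmin_left in Hz by lra. apply c3. lra. }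
  assert (exe : ex_RInt e 0 TT).
  { apply cont_ex_RInt. intros z Hz. rewrite Rmin_left in Hz by lra. unfold e.
    apply continuity_pt_plus; [apply continuity_pt_minus; [apply c1|apply c2; lra]|].
    apply (continuity_pt_ext (fun q => 3 * b * (q ^ 3 / A q ^ 4))); [intros; unfold Rdiv; ring|].
    apply continuity_pt_mult; [apply continuity_pt_const; intros u v; reflexivity|apply c3; lra]. }
  assert (Edec : RInt (fun q => q / Gt Rad Srad h q ^ 3) 0 TT =
     RInt (fun q => q / A q ^ 3) 0 TT - 3 * b * RInt (fun q => q ^ 3 / A q ^ 4) 0 TT + RInt e 0 TT).
  { assert (ex2' : ex_RInt (fun q => 3 * b * (q ^ 3 / A q ^ 4)) 0 TT) by (apply exRI_scal; exact ex2).
    assert (ex12 : ex_RInt (fun q => q / A q ^ 3 - 3 * b * (q ^ 3 / A q ^ 4)) 0 TT) by (apply exRI_minus; assumption).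
    rewrite <- (RIscal _ _ _ _ ex2).
    rewrite <- (RIminus _ _ _ _ ex1 ex2').
    rewrite <- (RIplus _ _ _ _ ex12 exe).
    apply RIext. intros x _. unfold e. unfold Rdiv. ring. }
  rewrite Edec.
  pose proof (I1 Rad Srad L HR HS HL h ltac:(lra)) as E1.
  pose proof (I2 Rad Srad L HR HS HL h ltac:(lra)) as E2.
  unfold T in E1, E2. fold a in E1, E2. fold TT in E1, E2.
  unfold A. rewrite E1, E2.
  set (X := h + a * TT).
  assert (HX1 : a * TT <= X) by (unfold X; lra).
  assert (HX2 : X <= 1 + a * TT) by (unfold X; lra).
  assert (HX0 : 0 < X) by lra.
  assert (B1 : Rabs (TT ^ 2 / (2 * h * X ^ 2) - 1 / (2 * a ^ 2 * h)) <= (1 + 2 * a * TT) / (2 * a ^ 2 * (a * TT) ^ 2)).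
  { replace (TT ^ 2 / (2 * h * X ^ 2) - 1 / (2 * a ^ 2 * h)) with (- ((h + 2 * a * TT) / (2 * a ^ 2 * X ^ 2)))
      by (unfold X; field; repeat split; lra).
    rewrite Rabs_Ropp. assert (HD2 : 0 < 2 * a ^ 2 * X ^ 2) by (apply Rmult_lt_0_compat; [apply Rmult_lt_0_compat; [lra|apply pow_lt; lra]|apply pow_lt; lra]).
    rewrite Rabs_pos_eq by (apply Rdiv_le_0_compat; [nra|exact HD2]).
    apply Rle_trans with ((1 + 2 * a * TT) / (2 * a ^ 2 * X ^ 2)).
    - unfold Rdiv. apply Rmult_le_compat_r; [left; apply Rinv_0_lt_compat; exact HD2|lra].
    - unfold Rdiv. apply Rmult_le_compat_l; [nra|]. apply Rinv_le_contravar.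
      + apply Rmult_lt_0_compat; [apply Rmult_lt_0_compat; [lra|apply pow_lt; lra]|apply pow_lt; lra].
      + apply Rmult_le_compat_l; [assert (0 < a ^ 2) by (apply pow_lt; lra); lra|]. apply pow_incr. lra. }
  assert (B2 : Rabs (P2 Rad Srad h TT - P2 Rad Srad h 0 + ln h / a ^ 4) <=
               (Rabs (ln (a * TT)) + Rabs (ln (1 + a * TT)) + 10) / a ^ 4).
  { set (u := h / X).
    assert (Hu : 0 < u <= 1).
    { unfold u. split; [apply Rdiv_lt_0_compat; lra|]. apply Rmult_le_reg_r with X; [lra|].
      field_simplify; [|lra]. unfold X. lra. }
    assert (EP : P2 Rad Srad h TT - P2 Rad Srad h 0 + ln h / a ^ 4 =
                 (ln X + (3 * u - 3 * u ^ 2 / 2 + u ^ 3 / 3 - 3 + 3 / 2 - 1 / 3)) / a ^ 4).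
    { unfold P2. fold a. fold X. replace (h + a * 0) with h by ring. unfold u. field. split; lra. }
    rewrite EP. unfold Rdiv. rewrite Rabs_mult. rewrite (Rabs_pos_eq (/ a ^ 4)) by (left; apply Rinv_0_lt_compat; apply pow_lt; lra).
    apply Rmult_le_compat_r; [left; apply Rinv_0_lt_compat; apply pow_lt; lra|].
    eapply Rle_trans; [apply Rabs_triang|].
    assert (L1 : Rabs (ln X) <= Rabs (ln (a * TT)) + Rabs (ln (1 + a * TT))).
    { pose proof (ln_le (a * TT) X HaT HX1). pose proof (ln_le X (1 + a * TT) HX0 HX2).
      pose proof (Rabs_pos (ln (a * TT))). pose proof (Rabs_pos (ln (1 + a * TT))).
      pose proof (Rle_abs (ln (1 + a * TT))). pose proof (Rle_abs (- ln (a * TT))). rewrite Rabs_Ropp in H4.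
      apply Rabs_le. lra. }
    assert (L2 : Rabs (3 * u - 3 * u ^ 2 / 2 + u ^ 3 / 3 - 3 + 3 / 2 - 1 / 3) <= 10).
    { assert (0 <= u ^ 2 <= 1) by (split; nra). assert (0 <= u ^ 3 <= 1) by (split; simpl; nra).
      apply Rabs_le. lra. }
    lra. }
  assert (B3 : Rabs (RInt e 0 TT) <= TT * Ce Rad Srad L).
  { replace (TT * Ce Rad Srad L) with ((TT - 0) * Ce Rad Srad L) by ring.
    apply abs_RInt_le_const; [lra|exact exe|].
    intros t Ht. unfold e, A. apply e_bound; try assumption; try lra; unfold T; fold TT; lra. }
  match goal with |- Rabs ?z <= _ =>
    assert (Ez : z = (TT ^ 2 / (2 * h * X ^ 2) - 1 / (2 * a ^ 2 * h)) - 3 * b * (P2 Rad Srad h TT - P2 Rad Srad h 0 + ln h / a ^ 4) + RInt e 0 TT)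
      by (unfold X; field; repeat split; lra) end.
  rewrite Ez.
  eapply Rle_trans; [apply Rabs_triang|].
  eapply Rle_trans; [apply Rplus_le_compat_r; apply Rabs_triang|].
  rewrite Rabs_Ropp, Rabs_mult, (Rabs_pos_eq (3 * b)) by lra.
  assert (3 * b * Rabs (P2 Rad Srad h TT - P2 Rad Srad h 0 + ln h / a ^ 4) <=
          3 * b * ((Rabs (ln (a * TT)) + Rabs (ln (1 + a * TT)) + 10) / a ^ 4)) by (apply Rmult_le_compat_l; lra).
  lra.
Qed.

End Asym3.

Lemma R3_cube Rad Srad : 0 < Rad -> 0 < Srad -> radR3 Rad Srad ^ 3 = / (/ Srad ^ 3 + / Rad ^ 3).
Proof.
  intros HR HS. unfold radR3.
  set (x := / (/ Srad ^ 3 + / Rad ^ 3)).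
  assert (Hx : 0 < x).
  { unfold x. apply Rinv_0_lt_compat.
    assert (0 < / Srad ^ 3) by (apply Rinv_0_lt_compat; apply pow_lt; lra).
    assert (0 < / Rad ^ 3) by (apply Rinv_0_lt_compat; apply pow_lt; lra). lra. }
  rewrite <- (Rpower_pow 3 (Rpower x (1/3))) by (apply exp_pos).
  rewrite Rpower_mult. replace (1 / 3 * INR 3) with 1 by (simpl; field). apply Rpower_1. exact Hx.
Qed.

Theorem proposition7 (Rad Srad L f0 : R) :
  0 < Rad -> 0 < Srad -> 0 < L -> L < Rmin Rad Srad ->
  exists C : R, forall h : R, 0 < h <= 1 ->
    forall w : R -> R -> R,
      is_solution (gamma Rad Srad h) L f0 w ->
      Rabs (energy (gamma Rad Srad h) L w
            - 72 * PI * (Rabs f0) ^ 2 *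
              (radR1 Rad Srad ^ 2 / h
               - 3 * radR1 Rad Srad ^ 4 / radR3 Rad Srad ^ 3 * Rabs (ln h)))
      <= C.
Proof.
  intros HR HS HL HLm.
  destruct (asym Rad Srad L HR HS HL HLm) as [C HC].
  exists (36 * PI * f0 ^ 2 * C).
  intros h Hh w Hw.
  assert (Hh0 : 0 < h) by lra.
  set (W := Wc Rad Srad h L (-3 * f0)).
  pose proof (uniq Rad Srad h L HR HS Hh0 HL f0 w Hw) as Hu. fold W in Hu.
  set (k := fun q => 36 * f0 ^ 2 * (q / Gt Rad Srad h q ^ 3)).
  assert (Hk : forall q, continuity_pt k q).
  { intros q. unfold k. apply continuity_pt_mult; [apply continuity_pt_const; intros a b; reflexivity|].
    apply continuity_pt_div.
    - apply derivable_continuous_pt; apply derivable_pt_id.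
    - apply (continuity_pt_comp (Gt Rad Srad h) (fun x => x ^ 3)); [apply cont_Gt|].
      apply derivable_continuous_pt; apply derivable_pt_pow.
    - apply pow_nonzero. pose proof (Gt_pos Rad Srad h HR HS Hh0 q). lra. }
  assert (HE : energy (gamma Rad Srad h) L w =
     RInt (fun x => RInt (fun y => k (x ^ 2 + y ^ 2)) (- cc L x) (cc L x)) (- L) L).
  { unfold energy. apply RIext. intros x Hx.
    rewrite Rmin_left in Hx by lra. rewrite Rmax_right in Hx by lra.
    unfold cc. apply RIext. intros y Hy.
    pose proof (sqrt_pos (L ^ 2 - x ^ 2)) as Hc0.
    rewrite Rmin_left in Hy by lra. rewrite Rmax_right in Hy by lra.
    assert (Hxy : x ^ 2 + y ^ 2 < L ^ 2).
    { assert (Hc2 : sqrt (L ^ 2 - x ^ 2) ^ 2 = L ^ 2 - x ^ 2) by (apply pow2_sqrt; nra). nra. }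
    assert (E1 : dx w x y = dx W x y).
    { unfold dx. apply Derive_ext_loc.
      destruct (open_nbhd x y L Hxy) as [d [Hd Hn]].
      exists (mkposreal d Hd). intros t Ht. apply Hu. apply Hn. exact Ht. }
    assert (E2 : dy w x y = dy W x y).
    { unfold dy. apply Derive_ext_loc.
      destruct (open_nbhd y x L ltac:(lra)) as [d [Hd Hn]].
      exists (mkposreal d Hd). intros t Ht. apply Hu. specialize (Hn t Ht). lra. }
    rewrite E1, E2. unfold W. rewrite Wc_dx_eq, Wc_dy_eq by assumption. rewrite gamma_Gt.
    unfold k. pose proof (Gt_pos Rad Srad h HR HS Hh0 (x ^ 2 + y ^ 2)). field. lra. }
  rewrite HE. rewrite (radial L k HL Hk).
  unfold Fk.
  assert (HI : RInt k 0 (L ^ 2) = 36 * f0 ^ 2 * RInt (fun q => q / Gt Rad Srad h q ^ 3) 0 (L ^ 2)).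
  { unfold k. apply RIscal. apply cont_all_ex_RInt. intros z. apply continuity_pt_div.
    - apply derivable_continuous_pt; apply derivable_pt_id.
    - apply (continuity_pt_comp (Gt Rad Srad h) (fun x => x ^ 3)); [apply cont_Gt|].
      apply derivable_continuous_pt; apply derivable_pt_pow.
    - apply pow_nonzero. pose proof (Gt_pos Rad Srad h HR HS Hh0 z). lra. }
  change (Rabs (PI * RInt k 0 (L ^ 2) - 72 * PI * Rabs f0 ^ 2 *
     (radR1 Rad Srad ^ 2 / h - 3 * radR1 Rad Srad ^ 4 / radR3 Rad Srad ^ 3 * Rabs (ln h))) <= 36 * PI * f0 ^ 2 * C).
  rewrite HI.
  specialize (HC h Hh).
  set (I := RInt (fun q => q / Gt Rad Srad h q ^ 3) 0 (L ^ 2)) in *.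
  assert (Hln : Rabs (ln h) = - ln h).
  { rewrite Rabs_left1; [reflexivity|]. rewrite <- ln_1. apply ln_le; lra. }
  rewrite Hln, pow2_abs, R3_cube by assumption.
  assert (Ea : radR1 Rad Srad = / (2 * aa Rad Srad)).
  { unfold radR1, aa. f_equal. field. split; lra. }
  assert (Eb : / (/ Srad ^ 3 + / Rad ^ 3) = / (8 * bb Rad Srad)).
  { unfold bb. f_equal. field. split; lra. }
  rewrite Ea, Eb.
  pose proof (aa_pos Rad Srad HR HS) as Ha. pose proof (bb_pos Rad Srad HR HS) as Hb.
  replace (PI * (36 * f0 ^ 2 * I) - 72 * PI * f0 ^ 2 *
     ((/ (2 * aa Rad Srad)) ^ 2 / h - 3 * (/ (2 * aa Rad Srad)) ^ 4 / / (8 * bb Rad Srad) * - ln h))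
    with ((36 * PI * f0 ^ 2) * (I - (1 / (2 * aa Rad Srad ^ 2 * h) + 3 * bb Rad Srad / aa Rad Srad ^ 4 * ln h)))
    by (field; repeat split; lra).
  rewrite Rabs_mult. rewrite (Rabs_pos_eq (36 * PI * f0 ^ 2)).
  - apply Rmult_le_compat_l; [|exact HC].
    pose proof PI_RGT_0. assert (0 <= f0 ^ 2) by apply pow2_ge_0. nra.
  - pose proof PI_RGT_0. assert (0 <= f0 ^ 2) by apply pow2_ge_0. nra.
Qed.
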